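(* Let $X_0=0$ and $X_n=\sum_{j=1}^{X_{n-1}}\xi_{n,j}+\varepsilon_n$ for $n\ge1$, where $\{\xi_{n,j},\varepsilon_n\}$ are independent nonnegative integer-valued random variables with $\xi_{n,j}$, $j\in\mathbb N$, identically distributed for each $n$. Let $G_n(x)=\mathbb E x^{\xi_{n,1}}$, $H_n(x)=\mathbb E x^{\varepsilon_n}$, $\rho_n=G_n'(1)$, $G_n''(1)<\infty$, and $m_{n,k}=H_n^{(k)}(1)$ (the $k$-th factorial moment of $\varepsilon_n$, assumed finite for all $k$). Assume (i) $\rho_n<1$, $\lim_n\rho_n=1$, $\sum_{n=1}^\infty(1-\rho_n)=\infty$, and $\lim_n G_n''(1)/(1-\rho_n)=0$; (ii) $\lim_{n\to\infty}\frac{m_{n,j}}{j(1-\rho_n)}=\lambda_j$ exists (finite) for every $j=1,2,\dots$, and $\limsup_{n\to\infty}(\lambda_n/n!)^{1/n}\le 1$. Then $X_n$ converges in distribution to a random variable $Y$ with generating function $$\mathbb E x^Y=\exp\Big\{\sum_{l=1}^\infty\frac{(x-1)^l}{l!}\lambda_l\Big\},\qquad x\in(0,1).$$ *)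

(* Defs.v *)
(* classical reals. Laws of nat-valued random variables are
   represented by their probability mass functions nat -> R. *)
From Stdlib Require Import Reals Lra Lia.
Open Scope R_scope.

Definition is_pmf (p : nat -> R) : Prop :=
  (forall k, 0 <= p k) /\ infinite_sum p 1.

Definition delta0 (k : nat) : R := if Nat.eqb k 0 then 1 else 0.

(* convolution of laws = law of the sum of independent variables *)
Definition conv (a b : nat -> R) (k : nat) : R :=
  sum_f_R0 (fun i => a i * b (k - i)%nat) k.

Fixpoint convpow (a : nat -> R) (m : nat) : nat -> R :=
  match m with
  | O => delta0
  | S m' => conv a (convpow a m')
  end.

Fixpoint fallfact (j k : nat) : nat :=
  match k with
  | O => 1%nat
  | S k' => (j - k') * fallfact j k'
  end.

(* M is the k-th factorial moment of the law p (finite): E[X(X-1)..(X-k+1)] = M,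
   i.e. M = G^{(k)}(1) for the generating function G of p *)
Definition fmoment (p : nat -> R) (k : nat) (M : R) : Prop :=
  infinite_sum (fun j => INR (fallfact j k) * p j) M.

(* p n is the law of X_n, where X_0 = 0 and
   X_n = sum_{j=1}^{X_{n-1}} xi_{n,j} + eps_n, with xi_{n,j} ~ g n i.i.d.,
   eps_n ~ h n, all independent. *)
Definition bpi_law (g h : nat -> nat -> R) (p : nat -> nat -> R) : Prop :=
  p O = delta0 /\
  forall n k,
    infinite_sum (fun m => p n m * conv (convpow (g (S n)) m) (h (S n)) k)
                 (p (S n) k).

Definition limsup_le_1 (a : nat -> R) : Prop :=
  forall eps, eps > 0 -> exists N, forall n, (n >= N)%nat -> a n <= 1 + eps.

Definition nroot (n : nat) (x : R) : R :=
  if Rle_dec x 0 then 0 else Rpower x (/ INR n).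

(* Main.v *)
Require Import Defs.
From Stdlib Require Import Reals Arith Factorial Lra Lia IndefiniteDescription.
From Coquelicot Require Import Coquelicot.
Open Scope R_scope.

Notation IS := infinite_sum.

Lemma IS_Un a l : IS a l <-> Un_cv (sum_f_R0 a) l.
Proof. reflexivity. Qed.

Lemma Un_cv_ext u v l : (forall n, u n = v n) -> Un_cv u l -> Un_cv v l.
Proof. intros E H e he. destruct (H e he) as [N HN]. exists N. intros n hn. rewrite <- E. auto. Qed.

Lemma IS_ext a b l : (forall n, a n = b n) -> IS a l -> IS b l.
Proof. intros E H. apply (Un_cv_ext (sum_f_R0 a)); auto. intro n. apply sum_eq. auto. Qed.

Lemma IS_plus a b la lb : IS a la -> IS b lb -> IS (fun n => a n + b n) (la + lb).
Proof. intros Ha Hb. apply (Un_cv_ext (fun n => sum_f_R0 a n + sum_f_R0 b n)).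
 intro. now rewrite sum_plus. now apply CV_plus. Qed.

Lemma Un_cv_const c : Un_cv (fun _ => c) c.
Proof. intros e he. exists 0%nat. intros. unfold Rdist. rewrite Rminus_diag, Rabs_R0. lra. Qed.

Lemma IS_scal c a l : IS a l -> IS (fun n => c * a n) (c * l).
Proof. intros H. apply (Un_cv_ext (fun n => c * sum_f_R0 a n)).
 intro. rewrite scal_sum. apply sum_eq. intros; ring.
 apply (CV_mult (fun _ => c)); auto. apply Un_cv_const. Qed.

Lemma cv_le (u v : nat -> R) l1 l2 : (forall n, u n <= v n) -> Un_cv u l1 -> Un_cv v l2 -> l1 <= l2.
Proof. apply Rle_cv_lim. Qed.

Lemma IS_le a b la lb : IS a la -> IS b lb -> (forall n, a n <= b n) -> la <= lb.
Proof. intros Ha Hb H. apply (cv_le _ _ _ _ (fun n => sum_Rle a b n (fun k _ => H k)) Ha Hb). Qed.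

Lemma IS_unique a l1 l2 : IS a l1 -> IS a l2 -> l1 = l2.
Proof. apply UL_sequence. Qed.

Lemma IS_nonneg a l : IS a l -> (forall n, 0 <= a n) -> 0 <= l.
Proof. intros H P. apply (IS_le (fun _ => 0) a); auto.
 apply (Un_cv_ext (fun _ => 0)). intro n. induction n; simpl; lra. apply Un_cv_const. Qed.

Lemma IS_bounded a M : (forall n, 0 <= a n) -> (forall N, sum_f_R0 a N <= M) ->
  exists l, IS a l /\ l <= M.
Proof. intros P B. destruct (growing_cv (sum_f_R0 a)) as [l Hl].
 intro n. simpl. specialize (P (S n)). lra.
 exists M. intros x [n ->]. auto.
 exists l. split; auto. apply (cv_le _ (fun _ => M) _ _ B Hl). apply Un_cv_const. Qed.

Lemma IS_comp a b lb : (forall n, 0 <= a n <= b n) -> IS b lb -> exists l, IS a l /\ l <= lb.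
Proof. intros P Hb. apply IS_bounded. intro n; apply P.
 intro N. apply Rle_trans with (sum_f_R0 b N). apply sum_Rle. intros; apply P.
 apply sum_incr; auto. intro n. destruct (P n); lra. Qed.

Lemma IS_partial_le a l N : IS a l -> (forall n, 0 <= a n) -> sum_f_R0 a N <= l.
Proof. intros H P. apply sum_incr; auto. Qed.

Lemma IS_finsum (a : nat -> nat -> R) c K :
  (forall k, IS (fun m => a m k) (c k)) ->
  IS (fun m => sum_f_R0 (fun k => a m k) K) (sum_f_R0 c K).
Proof. intro H. induction K; simpl. auto. apply IS_plus; auto. Qed.

Lemma tonelli (a : nat -> nat -> R) b c B :
  (forall m k, 0 <= a m k) -> (forall m, IS (a m) (b m)) ->
  (forall k, IS (fun m => a m k) (c k)) -> IS b B -> IS c B.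
Proof.
 intros P Hb Hc HB.
 assert (Pc : forall k, 0 <= c k). intro k. apply (IS_nonneg _ _ (Hc k)); auto.
 assert (Pb : forall m, 0 <= b m). intro m. apply (IS_nonneg _ _ (Hb m)); auto.
 destruct (IS_bounded c B Pc) as [C [HC HCB]].
 { intro K. apply (IS_le _ _ _ _ (IS_finsum a c K Hc) HB). intro m.
   apply (IS_partial_le (a m)); auto. }
 assert (B <= C).
 { apply (cv_le (sum_f_R0 b) (fun _ => C)); auto. 2: apply Un_cv_const.
   intro M. apply (IS_le _ _ _ _ (IS_finsum (fun k m => a m k) b M Hb) HC).
   intro k. apply (IS_partial_le (fun m => a m k)); auto. }
 replace B with C by lra. auto. Qed.

Lemma pow_le1 x n : 0 <= x <= 1 -> x ^ n <= 1.
Proof. intro H. rewrite <- (pow1 n). apply pow_incr. lra. Qed.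

Definition pgf (a : nat -> R) (s : R) := Series (fun i => a i * s ^ i).

Lemma IS_Series a l : IS a l -> Series a = l.
Proof. intro H. apply is_series_unique. now apply is_series_Reals. Qed.

Lemma pgf_IS a s : is_pmf a -> 0 <= s <= 1 ->
  IS (fun i => a i * s ^ i) (pgf a s) /\ 0 <= pgf a s <= 1.
Proof. intros [P S] Hs.
 destruct (IS_comp (fun i => a i * s ^ i) a 1) as [l [Hl Hl1]]; auto.
 intro n. split. apply Rmult_le_pos; auto. apply pow_le; lra.
 rewrite <- (Rmult_1_r (a n)) at 2. apply Rmult_le_compat_l; auto.
 apply pow_le1; lra.
 unfold pgf. rewrite (IS_Series _ _ Hl). split; auto. split; auto.
 apply (IS_nonneg _ _ Hl). intro n. apply Rmult_le_pos; auto. apply pow_le; lra. Qed.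

Lemma pgf_1 a : is_pmf a -> pgf a 1 = 1.
Proof. intros [P S]. apply IS_Series. apply (IS_ext a); auto. intro; rewrite pow1; ring. Qed.

Lemma conv_IS a b s la lb : (forall n, 0 <= a n) -> (forall n, 0 <= b n) -> 0 <= s ->
  IS (fun i => a i * s ^ i) la -> IS (fun i => b i * s ^ i) lb ->
  IS (fun k => conv a b k * s ^ k) (la * lb).
Proof. intros Pa Pb Hs Ha Hb.
 apply is_series_Reals in Ha. apply is_series_Reals in Hb.
 pose proof (is_series_mult_pos _ _ _ _ Ha Hb) as H.
 apply is_series_Reals in H.
 2,3: intro; apply Rmult_le_pos; auto; apply pow_le; auto.
 revert H. apply IS_ext. intro k.
 unfold conv. rewrite Rmult_comm, scal_sum. apply sum_eq. intros i Hi.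
 replace (s ^ k) with (s ^ i * s ^ (k - i)). ring. rewrite <- pow_add. f_equal. lia. Qed.

Lemma conv_pmf a b : is_pmf a -> is_pmf b -> is_pmf (conv a b) /\
  forall s, 0 <= s <= 1 -> pgf (conv a b) s = pgf a s * pgf b s.
Proof. intros Ha Hb.
 assert (G : forall s, 0 <= s <= 1 -> IS (fun k => conv a b k * s ^ k) (pgf a s * pgf b s)).
 { intros s Hs. apply conv_IS; try apply Ha; try apply Hb; try lra.
   apply pgf_IS; auto. apply pgf_IS; auto. }
 split.
 - split. intro k. unfold conv. apply cond_pos_sum. intro; apply Rmult_le_pos; [apply Ha|apply Hb].
   apply (IS_ext (fun k => conv a b k * 1 ^ k)). intro; rewrite pow1; ring.
   assert (E: pgf a 1 * pgf b 1 = 1) by (rewrite !pgf_1; auto; ring).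
   pose proof (G 1 ltac:(lra)) as G1. rewrite E in G1. exact G1.
 - intros s Hs. apply IS_Series. apply G; auto. Qed.

Lemma delta0_pmf : is_pmf delta0 /\ forall s, pgf delta0 s = 1.
Proof. assert (G : forall s, IS (fun k => delta0 k * s ^ k) 1).
 { intro s. apply (Un_cv_ext (fun _ => 1)). 2: apply Un_cv_const.
   intro n; induction n; simpl. unfold delta0; simpl; ring. rewrite <- IHn. unfold delta0; simpl; ring. }
 split. split. intro k; unfold delta0; destruct (Nat.eqb k 0); lra.
 apply (IS_ext _ _ _ (fun k => Rmult_1_r _)), (IS_ext (fun k => delta0 k * 1 ^ k)). intro; rewrite pow1; ring. apply G.
 intro s. apply IS_Series, G. Qed.

Lemma convpow_pmf a : is_pmf a -> forall m, is_pmf (convpow a m) /\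
  forall s, 0 <= s <= 1 -> pgf (convpow a m) s = pgf a s ^ m.
Proof. intros Ha m. induction m; simpl.
 - split. apply delta0_pmf. intros; apply delta0_pmf.
 - destruct IHm as [P E]. destruct (conv_pmf a _ Ha P) as [P2 E2]. split; auto.
   intros s Hs. rewrite E2, E; auto. Qed.

Lemma IS_ext2 a b l1 l2 : IS a l1 -> (forall n, a n = b n) -> l1 = l2 -> IS b l2.
Proof. intros H E <-. revert H. apply IS_ext; auto. Qed.

Section BPI.
Variables (g h p : nat -> nat -> R).
Hypothesis Hg : forall n, (1 <= n)%nat -> is_pmf (g n).
Hypothesis Hh : forall n, (1 <= n)%nat -> is_pmf (h n).
Hypothesis Hp : bpi_law g h p.

Lemma bpi_step n : is_pmf (p n) -> forall s, 0 <= s <= 1 ->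
  IS (fun k => p (S n) k * s ^ k) (pgf (p n) (pgf (g (S n)) s) * pgf (h (S n)) s).
Proof.
 intros Pn s Hs.
 assert (HgS := Hg (S n) ltac:(lia)). assert (HhS := Hh (S n) ltac:(lia)).
 destruct (pgf_IS _ s HgS Hs) as [_ Gs].
 destruct (pgf_IS _ s HhS Hs) as [_ Hs'].
 destruct (pgf_IS _ _ Pn Gs) as [IP _].
 apply (tonelli (fun m k => p n m * conv (convpow (g (S n)) m) (h (S n)) k * s ^ k)
          (fun m => p n m * pgf (g (S n)) s ^ m * pgf (h (S n)) s)).
 - intros m k. destruct (convpow_pmf _ HgS m) as [Pm _].
   destruct (conv_pmf _ _ Pm HhS) as [[Pc _] _].
   apply Rmult_le_pos. apply Rmult_le_pos. apply Pn. apply Pc. apply pow_le; lra.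
 - intro m. destruct (convpow_pmf _ HgS m) as [Pm Em].
   destruct (conv_pmf _ _ Pm HhS) as [Pc Ec].
   destruct (pgf_IS _ s Pc Hs) as [Ic _].
   rewrite Ec, Em in Ic; auto.
   pose proof (IS_scal (p n m) _ _ Ic) as I2. apply (IS_ext2 _ _ _ _ I2).
   intro; ring. ring.
 - intro k. destruct Hp as [_ Hr].
   pose proof (IS_scal (s ^ k) _ _ (Hr n k)) as I2. apply (IS_ext2 _ _ _ _ I2). intro; ring. ring.
 - pose proof (IS_scal (pgf (h (S n)) s) _ _ IP) as I2. apply (IS_ext2 _ _ _ _ I2). intro; ring. ring.
Qed.

Lemma p_pmf : forall n, is_pmf (p n).
Proof.
 induction n.
 - destruct Hp as [-> _]. apply delta0_pmf.
 - pose proof (bpi_step n IHn) as St. split.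
   + intro k. destruct Hp as [_ Hr]. apply (IS_nonneg _ _ (Hr n k)).
     intro m. apply Rmult_le_pos. apply IHn.
     destruct (convpow_pmf _ (Hg (S n) ltac:(lia)) m) as [Pm _].
     destruct (conv_pmf _ _ Pm (Hh (S n) ltac:(lia))) as [[Pc _] _]. apply Pc.
   + pose proof (St 1 ltac:(lra)) as I1.
     rewrite (pgf_1 (g (S n))), (pgf_1 (p n)), (pgf_1 (h (S n))) in I1; auto; try apply Hg; try apply Hh; try lia.
     apply (IS_ext2 _ _ _ _ I1). intro; rewrite pow1; ring. ring.
Qed.

Lemma pgf_rec n s : 0 <= s <= 1 ->
  pgf (p (S n)) s = pgf (p n) (pgf (g (S n)) s) * pgf (h (S n)) s.
Proof. intro Hs. apply IS_Series. apply bpi_step; auto. apply p_pmf. Qed.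

End BPI.

Lemma sum_minus' a b N : sum_f_R0 (fun i => a i - b i) N = sum_f_R0 a N - sum_f_R0 b N.
Proof. induction N; simpl; lra. Qed.

Lemma sum_mono d K N : (forall j, 0 <= d j) -> (K <= N)%nat -> sum_f_R0 d K <= sum_f_R0 d N.
Proof. intros P H. induction H. lra. simpl. specialize (P (S m)). lra. Qed.

Lemma tail_bound a x K : is_pmf a -> 0 < x < 1 ->
  0 <= pgf a x - sum_f_R0 (fun j => a j * x ^ j) K <= x ^ S K / (1 - x).
Proof.
 intros Pa Hx. destruct (pgf_IS a x Pa ltac:(lra)) as [I _].
 assert (Pt : forall j, 0 <= a j * x ^ j). intro; apply Rmult_le_pos. apply Pa. apply pow_le; lra.
 assert (0 < x ^ S K). apply pow_lt; lra.
 split. pose proof (IS_partial_le _ _ K I Pt). lra.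
 assert (pgf a x <= sum_f_R0 (fun j => a j * x ^ j) K + x ^ S K / (1 - x)); [|lra].
 apply (cv_le (sum_f_R0 (fun j => a j * x ^ j)) (fun _ => sum_f_R0 (fun j => a j * x ^ j) K + x ^ S K / (1 - x)) _ _); auto.
 2: apply Un_cv_const.
 intro N. destruct (le_lt_dec N K).
 - pose proof (sum_mono _ _ _ Pt l). assert (0 < x ^ S K / (1-x)) by (apply Rdiv_lt_0_compat; lra). lra.
 - assert (D : sum_f_R0 (fun j => x ^ j - a j * x ^ j) K <= sum_f_R0 (fun j => x ^ j - a j * x ^ j) N).
   { apply sum_mono. 2: lia. intro j. assert (a j <= 1).
     { destruct Pa as [P S]. apply Rle_trans with (sum_f_R0 a j).
       destruct j; simpl. lra. pose proof (cond_pos_sum a j P). lra.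
       apply (IS_partial_le a 1 j S P). }
     pose proof (pow_le x j ltac:(lra)). nra. }
   rewrite !sum_minus', !tech3 in D by lra.
   assert (0 <= x ^ S N) by (apply pow_le; lra).
   assert (x ^ S N / (1-x) >= 0). apply Rle_ge, Rdiv_le_0_compat; lra.
   unfold Rdiv in *. assert (E: (1 - x ^ S N) * / (1 - x) - (1 - x ^ S K) * / (1 - x) = x ^ S K */ (1-x) - x ^ S N * / (1-x)) by (field; lra).
   lra.
Qed.

Lemma Un_cv_sum (u : nat -> nat -> R) l K :
  (forall k, (k <= K)%nat -> Un_cv (fun n => u n k) (l k)) -> Un_cv (fun n => sum_f_R0 (u n) K) (sum_f_R0 l K).
Proof. intro H. induction K; simpl. apply H; lia.
 apply (CV_plus (fun n => sum_f_R0 (u n) K) (fun n => u n (S K))). apply IHK. intros; apply H; lia. apply H; lia. Qed.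

Lemma Un_cv_scal c u l : Un_cv u l -> Un_cv (fun n => c * u n) (c * l).
Proof. intro H. apply (CV_mult (fun _ => c)); auto. apply Un_cv_const. Qed.

Lemma cv_le_const_l (u : nat -> R) l c : (forall n, c <= u n) -> Un_cv u l -> c <= l.
Proof. intros H Hu. apply (cv_le (fun _ => c) u); auto. apply Un_cv_const. Qed.
Lemma cv_le_const_r (u : nat -> R) l c : (forall n, u n <= c) -> Un_cv u l -> l <= c.
Proof. intros H Hu. apply (cv_le u (fun _ => c)); auto. apply Un_cv_const. Qed.

Section Cont.
Variables (p : nat -> nat -> R) (F : R -> R).
Hypothesis Pp : forall n, is_pmf (p n).
Hypothesis HF : forall x, 0 < x < 1 -> Un_cv (fun n => pgf (p n) x) (F x).
Hypothesis HF1 : forall eps, eps > 0 -> exists x, 0 < x < 1 /\ F x > 1 - eps.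

Lemma p_conv_all : forall k, exists l, Un_cv (fun n => p n k) l.
Proof.
 intro k. induction k as [k IH] using (well_founded_induction lt_wf).
 assert (IH' : forall j, exists l, (j < k)%nat -> Un_cv (fun n => p n j) l).
 { intro j. destruct (lt_dec j k) as [h|h]. destruct (IH j h) as [l Hl]. exists l; auto.
   exists 0. intro; lia. }

 set (c j := proj1_sig (constructive_indefinite_description _ (IH' j))).
 assert (Hc : forall j, (j < k)%nat -> Un_cv (fun n => p n j) (c j)).
 { intro j. unfold c. destruct (constructive_indefinite_description _ (IH' j)). auto. }
 set (Sp n x := match k with O => 0 | S k' => sum_f_R0 (fun j => p n j * x ^ j) k' end).
 set (Sl x := match k with O => 0 | S k' => sum_f_R0 (fun j => c j * x ^ j) k' end).
 assert (HS : forall x, Un_cv (fun n => Sp n x) (Sl x)).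
 { intro x. unfold Sp, Sl. destruct k. apply Un_cv_const.
   apply (Un_cv_sum (fun n j => p n j * x ^ j)). intros j0 hj.
   apply (CV_mult _ (fun _ => x ^ j0)). apply Hc. lia. apply Un_cv_const. }
 set (Rn n x := (pgf (p n) x - Sp n x) / x ^ k).
 assert (HR : forall x, 0 < x < 1 -> Un_cv (fun n => Rn n x) ((F x - Sl x) / x ^ k)).
 { intros x hx. unfold Rn, Rdiv. apply (CV_mult _ (fun _ => / x ^ k)).
   apply CV_minus; auto. apply Un_cv_const. }
 assert (HB : forall n x, 0 < x < 1 -> 0 <= Rn n x - p n k <= x / (1 - x)).
 { intros n x hx. pose proof (tail_bound (p n) x k (Pp n) hx) as T.
   assert (E : sum_f_R0 (fun j => p n j * x ^ j) k = Sp n x + p n k * x ^ k).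
   { unfold Sp. destruct k; simpl; ring. }
   rewrite E in T. assert (0 < x ^ k) by (apply pow_lt; lra).
   assert (E2 : Rn n x - p n k = (pgf (p n) x - (Sp n x + p n k * x ^ k)) / x ^ k).
   { unfold Rn. field. lra. }
   assert (E3 : x ^ S k / (1 - x) / x ^ k = x / (1 - x)). { simpl. field. lra. }
   rewrite E2, <- E3. split. apply Rdiv_le_0_compat; lra.
   unfold Rdiv. apply Rmult_le_compat_r. left; apply Rinv_0_lt_compat; lra. lra. }
 assert (Cau : Cauchy_crit (fun n => p n k)).
 { intros e he. set (x := Rmin (1/2) (e/4)).
   assert (hx : 0 < x < 1). { unfold x. split. apply Rmin_glb_lt; lra. pose proof (Rmin_l (1/2) (e/4)); lra. }
   assert (hx2 : x / (1 - x) <= e / 2).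
   { assert (x <= 1/2) by apply Rmin_l. assert (x <= e/4) by apply Rmin_r.
     apply Rle_trans with (2 * x). apply (Rmult_le_reg_r (1 - x)). lra. unfold Rdiv. rewrite Rmult_assoc, Rinv_l; nra. lra. }
   destruct (HR x hx (e/4) ltac:(lra)) as [N HN]. exists N. intros n m hn hm.
   pose proof (HN n hn). pose proof (HN m hm). pose proof (HB n x hx). pose proof (HB m x hx).
   unfold Rdist in *. apply Rabs_def2 in H. apply Rabs_def2 in H0. apply Rabs_def1; lra. }
 destruct (Rcomplete.R_complete _ Cau) as [l Hl]. exists l. exact Hl.
Qed.

Lemma geom_tail x eps : 0 < x < 1 -> eps > 0 -> exists N, forall K, (K >= N)%nat -> x ^ S K / (1 - x) < eps.
Proof. intros hx he. destruct (pow_lt_1_zero x ltac:(rewrite Rabs_pos_eq; lra) (eps * (1 - x)) ltac:(nra)) as [N HN].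
 exists N. intros K hK. specialize (HN (S K) ltac:(lia)). rewrite Rabs_pos_eq in HN by (apply pow_le; lra).
 apply (Rmult_lt_reg_r (1 - x)). lra. unfold Rdiv. rewrite Rmult_assoc, Rinv_l; lra. Qed.

Lemma cont_thm : exists q, is_pmf q /\ (forall k, Un_cv (fun n => p n k) (q k)) /\
  forall x, 0 < x < 1 -> IS (fun k => q k * x ^ k) (F x).
Proof.
 set (q k := proj1_sig (constructive_indefinite_description _ (p_conv_all k))).
 assert (Hq : forall k, Un_cv (fun n => p n k) (q k)).
 { intro k. unfold q. destruct (constructive_indefinite_description _ (p_conv_all k)). auto. }
 assert (Pq : forall k, 0 <= q k). { intro k. apply (cv_le_const_l _ _ 0 (fun n => proj1 (Pp n) k) (Hq k)). }
 assert (T : forall x K, 0 < x < 1 -> 0 <= F x - sum_f_R0 (fun k => q k * x ^ k) K <= x ^ S K / (1 - x)).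
 { intros x K hx.
   assert (C : Un_cv (fun n => pgf (p n) x - sum_f_R0 (fun k => p n k * x ^ k) K) (F x - sum_f_R0 (fun k => q k * x ^ k) K)).
   { apply CV_minus. auto. apply (Un_cv_sum (fun n k => p n k * x ^ k)). intros.
     apply (CV_mult _ (fun _ => x ^ k)). auto. apply Un_cv_const. }
   split. apply (cv_le_const_l _ _ 0 (fun n => proj1 (tail_bound (p n) x K (Pp n) hx)) C).
   apply (cv_le_const_r _ _ _ (fun n => proj2 (tail_bound (p n) x K (Pp n) hx)) C). }
 assert (IF : forall x, 0 < x < 1 -> IS (fun k => q k * x ^ k) (F x)).
 { intros x hx e he. destruct (geom_tail x e hx he) as [N HN]. exists N. intros K hK.
   specialize (HN K hK). specialize (T x K hx). unfold Rdist. rewrite Rabs_minus_sym, Rabs_pos_eq; lra. }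
 exists q. split; [|split]; auto.
 split; auto.
 intros e he. destruct (HF1 (e/2) ltac:(lra)) as [x [hx Fx]].
 destruct (geom_tail x (e/2) hx ltac:(lra)) as [N HN]. exists N. intros K hK.
 specialize (HN K hK). specialize (T x K hx).
 assert (U : sum_f_R0 q K <= 1).
 { apply (cv_le_const_r (fun n => sum_f_R0 (p n) K)). intro n. apply IS_partial_le. apply Pp. apply Pp.
   apply Un_cv_sum. auto. }
 assert (L : sum_f_R0 (fun k => q k * x ^ k) K <= sum_f_R0 q K).
 { apply sum_Rle. intros k _. pose proof (pow_le1 x k ltac:(lra)). pose proof (Pq k). nra. }
 unfold Rdist. rewrite Rabs_minus_sym, Rabs_pos_eq; lra.
Qed.
End Cont.

Fixpoint sm (f : nat -> R) (n : nat) : R := match n with O => 0 | S n' => sm f n' + f n end.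

Lemma sm_ext_in f g n : (forall k, (1 <= k <= n)%nat -> f k = g k) -> sm f n = sm g n.
Proof. induction n; simpl; intros H; auto. rewrite IHn, (H (S n)); auto; try lia; intros; apply H; lia. Qed.
Lemma sm_le_in f g n : (forall k, (1 <= k <= n)%nat -> f k <= g k) -> sm f n <= sm g n.
Proof. induction n; simpl; intros H. lra. assert (sm f n <= sm g n) by (apply IHn; intros; apply H; lia).
 specialize (H (S n) ltac:(lia)). lra. Qed.
Lemma sm_plus f g n : sm (fun k => f k + g k) n = sm f n + sm g n.
Proof. induction n; simpl; lra. Qed.
Lemma sm_minus f g n : sm (fun k => f k - g k) n = sm f n - sm g n.
Proof. induction n; simpl; lra. Qed.
Lemma sm_scal c f n : sm (fun k => c * f k) n = c * sm f n.
Proof. induction n; simpl; lra. Qed.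
Lemma sm_nonneg_in f n : (forall k, (1 <= k <= n)%nat -> 0 <= f k) -> 0 <= sm f n.
Proof. intro H. apply Rle_trans with (sm (fun _ => 0) n). clear H; induction n; simpl; lra. apply sm_le_in; auto. Qed.
Lemma sm_abs f n : Rabs (sm f n) <= sm (fun k => Rabs (f k)) n.
Proof. induction n; simpl. rewrite Rabs_R0; lra. apply Rle_trans with (Rabs (sm f n) + Rabs (f (S n))). apply Rabs_triang. lra. Qed.
Lemma sm_tele a n : sm (fun k => a k - a (k - 1)%nat) n = a n - a 0%nat.
Proof. induction n; simpl. ring. rewrite IHn. replace (n - 0)%nat with n by lia. ring. Qed.
Lemma sm_mono_n f n m : (forall k, (1 <= k)%nat -> 0 <= f k) -> (n <= m)%nat -> sm f n <= sm f m.
Proof. intros P H. induction H. lra. simpl. specialize (P (S m) ltac:(lia)). lra. Qed.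
Lemma sm_sum_f f n : sm f (S n) = sum_f_R0 (fun i => f (S i)) n.
Proof. induction n; simpl. ring. simpl in IHn. rewrite <- IHn. ring. Qed.
Lemma sm_swap (f : nat -> nat -> R) n N :
  sm (fun k => sum_f_R0 (fun i => f k i) N) n = sum_f_R0 (fun i => sm (fun k => f k i) n) N.
Proof. induction n; simpl. induction N; simpl; lra. rewrite IHn, <- sum_plus. reflexivity. Qed.

Lemma Un_cv_sm (b : nat -> nat -> R) l K :
  (forall k, (1 <= k <= K)%nat -> Un_cv (fun n => b n k) (l k)) -> Un_cv (fun n => sm (b n) K) (sm l K).
Proof. intro H. induction K; simpl. apply Un_cv_const. apply (CV_plus (fun n => sm (b n) K) (fun n => b n (S K))).
 apply IHK. intros; apply H; lia. apply H; lia. Qed.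

Lemma Un_cv_ext_ev u v l : (exists N, forall n, (n >= N)%nat -> u n = v n) -> Un_cv u l -> Un_cv v l.
Proof. intros [N0 E] H e he. destruct (H e he) as [N HN]. exists (max N N0). intros n hn.
 rewrite <- E by lia. apply HN; lia. Qed.

Lemma squeeze u v w l : (exists N, forall n, (n >= N)%nat -> u n <= v n <= w n) -> Un_cv u l -> Un_cv w l -> Un_cv v l.
Proof. intros [N0 B] Hu Hw e he. destruct (Hu e he) as [N1 H1]. destruct (Hw e he) as [N2 H2].
 exists (max N0 (max N1 N2)). intros n hn. specialize (B n ltac:(lia)). specialize (H1 n ltac:(lia)).
 specialize (H2 n ltac:(lia)). unfold Rdist in *. apply Rabs_def2 in H1. apply Rabs_def2 in H2. apply Rabs_def1; lra. Qed.

Lemma exp_le a b : a <= b -> exp a <= exp b.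
Proof. intros [h|h]. left; apply exp_increasing; auto. subst; lra. Qed.

Lemma Un_cv_pow u l j : Un_cv u l -> Un_cv (fun n => u n ^ j) (l ^ j).
Proof. intro H. induction j; simpl. apply Un_cv_const. apply CV_mult; auto. Qed.

Lemma pow_diff a b j : 0 <= b <= a -> a ^ S j - b ^ S j <= INR (S j) * a ^ j * (a - b).
Proof. intro H. induction j. simpl. lra.
 replace (a ^ S (S j) - b ^ S (S j)) with (a * (a ^ S j - b ^ S j) + b ^ S j * (a - b)) by (simpl; ring).
 assert (b ^ S j <= a ^ S j) by (apply pow_incr; lra).
 assert (0 <= a) by lra.
 apply Rle_trans with (a * (INR (S j) * a ^ j * (a - b)) + a ^ S j * (a - b)).
 apply Rplus_le_compat. apply Rmult_le_compat_l; auto. apply Rmult_le_compat_r; lra.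
 replace (INR (S (S j))) with (INR (S j) + 1) by (rewrite (S_INR (S j)); ring). simpl. right; ring. Qed.

Lemma bern_bounds t j : 0 <= t <= 1 -> 1 - INR j * t <= (1 - t) ^ j <= 1 - INR j * t + INR j ^ 2 * t ^ 2.
Proof. intro H. induction j. simpl. lra. destruct IHj as [L U]. rewrite S_INR. simpl.
 assert (0 <= INR j) by apply pos_INR. split.
 - assert ((1 - t) * (1 - INR j * t) <= (1 - t) * (1 - t) ^ j) by (apply Rmult_le_compat_l; lra). nra.
 - assert ((1 - t) * (1 - t) ^ j <= (1 - t) * (1 - INR j * t + INR j ^ 2 * t ^ 2)) by (apply Rmult_le_compat_l; lra).
   simpl in H1. nra. Qed.

Lemma key_ineq j (rh G u v e : R) : 0 <= rh < 1 -> 0 <= G -> 0 <= u <= 1 -> 0 <= v ->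
  rh * u - G * u ^ 2 / 2 <= v <= rh * u ->
  INR (S j) ^ 2 * (1 - rh) <= e -> INR (S j) * G <= e * (1 - rh) ->
  Rabs (INR (S j) * (1 - rh) * u ^ S j - (u ^ S j - v ^ S j)) <= e * ((1 - rh) * u ^ S j).
Proof.
 intros Hrh HG Hu Hv Hb He1 He2.
 set (J := INR (S j)) in *. set (U := u ^ S j) in *.
 assert (HJ : 0 < J) by (apply lt_0_INR; lia).
 assert (HU : 0 <= U) by (apply pow_le; lra).
 destruct (bern_bounds (1 - rh) (S j) ltac:(lra)) as [B1 B2].
 replace (1 - (1 - rh)) with rh in B1, B2 by ring. fold J in B1, B2.
 assert (E1 : (rh * u) ^ S j = rh ^ S j * U) by (unfold U; apply Rpow_mult_distr).
 assert (V1 : v ^ S j <= (rh * u) ^ S j) by (apply pow_incr; lra).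
 assert (V2 : (rh * u) ^ S j - v ^ S j <= J * (rh * u) ^ j * (rh * u - v)) by (apply pow_diff; lra).
 assert (V3 : (rh * u) ^ j <= u ^ j) by (apply pow_incr; split; nra).
 assert (V4 : 0 <= (rh * u) ^ j) by (apply pow_le; nra).
 assert (V5 : J * (rh * u) ^ j * (rh * u - v) <= J * u ^ j * (G * u ^ 2 / 2)).
 { apply Rmult_le_compat. nra. lra. apply Rmult_le_compat_l; lra. lra. }
 assert (V6 : u ^ j * u ^ 2 <= U). { unfold U. replace (u ^ S j) with (u ^ j * u) by (simpl; ring).
   assert (0 <= u ^ j) by (apply pow_le; lra). assert (0 <= u ^ j * u) by (apply Rmult_le_pos; lra). simpl. nra. }
 assert (V7 : J * u ^ j * (G * u ^ 2 / 2) <= (J * G) * U / 2).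
 { assert (0 <= J * G) by nra. set (P := u ^ j) in *. replace (J * P * (G * u ^ 2 / 2)) with ((J * G) * (P * u ^ 2) / 2) by field.
   apply Rmult_le_compat_r. lra. apply Rmult_le_compat_l; lra. }
 assert (V8 : (J * G) * U <= e * (1 - rh) * U) by (apply Rmult_le_compat_r; lra).
 assert (U1 : rh ^ S j * U <= (1 - J * (1 - rh) + J ^ 2 * (1 - rh) ^ 2) * U) by (apply Rmult_le_compat_r; lra).
 assert (U2 : (1 - J * (1 - rh)) * U <= rh ^ S j * U) by (apply Rmult_le_compat_r; lra).
 assert (U3 : J ^ 2 * (1 - rh) ^ 2 * U <= e * (1 - rh) * U).
 { replace (J ^ 2 * (1 - rh) ^ 2 * U) with ((J ^ 2 * (1 - rh)) * ((1 - rh) * U)) by ring.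
   replace (e * (1 - rh) * U) with (e * ((1 - rh) * U)) by ring.
   apply Rmult_le_compat_r. nra. lra. }
 assert (0 <= e * (1 - rh) * U). { assert (0 <= J ^ 2 * (1 - rh)) by nra. nra. }
 apply Rabs_le. split.
 - nra.
 - nra.
Qed.

Section U.
Variables (rho G2 : nat -> R) (r : R) (u : nat -> nat -> R).
Hypothesis Hr : 0 < r < 1.
Hypothesis Hrho : forall k, (1 <= k)%nat -> 0 <= rho k < 1.
Hypothesis HG2 : forall k, (1 <= k)%nat -> 0 <= G2 k.
Hypothesis Hrho1 : Un_cv rho 1.
Hypothesis Hdelta : Un_cv (fun n => G2 n / (1 - rho n)) 0.
Hypothesis Hinf : cv_infty (fun N => sum_f_R0 (fun n => 1 - rho (S n)) N).
Hypothesis Hun : forall n, u n n = r.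
Hypothesis Hrec : forall n k, (1 <= k <= n)%nat ->
  rho k * u n k - G2 k * u n k ^ 2 / 2 <= u n (k - 1)%nat <= rho k * u n k.
Hypothesis Hpos : forall n k, (k <= n)%nat -> 0 <= u n k.

Let rs := sm (fun i => 1 - rho i).

Lemma u_bound n k : (k <= n)%nat -> u n k <= r * exp (- (rs n - rs k)).
Proof.
 intro H. remember (n - k)%nat as d. revert k H Heqd. induction d; intros k H Hd.
 - replace k with n by lia. rewrite Hun. replace (rs n - rs n) with 0 by ring. rewrite Ropp_0, exp_0. lra.
 - assert (IH := IHd (S k) ltac:(lia) ltac:(lia)).
   destruct (Hrec n (S k) ltac:(lia)) as [_ R2]. replace (S k - 1)%nat with k in R2 by lia.
   assert (rho (S k) <= exp (rho (S k) - 1)) by (pose proof (exp_ineq1_le (rho (S k) - 1)); lra).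
   assert (0 <= u n (S k)) by (apply Hpos; lia). destruct (Hrho (S k)); try lia.
   assert (E : rs (S k) = rs k + (1 - rho (S k))) by reflexivity.
   rewrite E in IH.
   replace (- (rs n - rs k)) with (- (rs n - (rs k + (1 - rho (S k)))) + (rho (S k) - 1)) by ring.
   rewrite exp_plus.
   apply Rle_trans with (rho (S k) * u n (S k)); auto.
   apply Rle_trans with (exp (rho (S k) - 1) * (r * exp (- (rs n - (rs k + (1 - rho (S k))))))).
   apply Rmult_le_compat; lra. right; ring.
Qed.

Lemma rs_mono k n : (k <= n)%nat -> rs k <= rs n.
Proof. intro H. apply sm_mono_n; auto. intros i hi. destruct (Hrho i hi); lra. Qed.

Lemma u_le_r n k : (k <= n)%nat -> u n k <= r.
Proof. intro H. eapply Rle_trans. apply u_bound; auto. rewrite <- (Rmult_1_r r) at 2.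
 apply Rmult_le_compat_l. lra. rewrite <- exp_0. apply exp_le. pose proof (rs_mono k n H). lra. Qed.

Lemma u_to_0 k : Un_cv (fun n => u n k) 0.
Proof.
 intros e he. destruct (Hinf (rs k + r / e)) as [N HN]. exists (max k (S N)). intros n hn.
 assert (hs : rs k + r / e < rs n).
 { destruct n. lia. unfold rs. rewrite sm_sum_f. apply HN. lia. }
 unfold Rdist. rewrite Rminus_0_r, Rabs_pos_eq by (apply Hpos; lia).
 eapply Rle_lt_trans. apply u_bound; lia.
 set (t := rs n - rs k). assert (r / e < t) by (unfold t; lra).
 assert (1 + t <= exp t) by apply exp_ineq1_le.
 rewrite exp_Ropp. assert (0 < exp t) by apply exp_pos.
 assert (r / e * e = r) by (field; lra).
 apply (Rmult_lt_reg_r (exp t)); auto. rewrite Rmult_assoc, Rinv_l by lra. nra.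
Qed.

Lemma W_bound n j : (1 <= j)%nat -> sm (fun k => (1 - rho k) * u n k ^ j) n <= 1.
Proof.
 intro hj. apply Rle_trans with (sm (fun k => u n k - u n (k - 1)%nat) n).
 - apply sm_le_in. intros k hk. destruct (Hrec n k hk) as [_ R2]. destruct (Hrho k); try lia.
   assert (0 <= u n k <= r) by (split; [apply Hpos|apply u_le_r]; lia).
   assert (u n k ^ j <= u n k). { destruct j. lia. assert (u n k ^ j <= 1) by (apply pow_le1; lra).
     simpl. nra. }
   assert (0 <= u n k ^ j) by (apply pow_le; lra). nra.
 - rewrite sm_tele, Hun. pose proof (Hpos n 0 ltac:(lia)). lra.
Qed.

Lemma sm_trunc f K n : (forall k, (K <= k)%nat -> f k = 0) -> (forall k, 0 <= f k) -> sm f n <= sm f K.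
Proof. intros Z P. induction n. simpl. apply sm_nonneg_in; auto.
 destruct (le_lt_dec (S n) K). apply sm_mono_n; auto. simpl. rewrite (Z (S n)) by lia. lra. Qed.

Lemma vanish (b w : nat -> nat -> R) :
  (forall n k, (1 <= k <= n)%nat -> 0 <= w n k) -> (forall n, sm (w n) n <= 1) ->
  (forall k, (1 <= k)%nat -> Un_cv (fun n => b n k) 0) ->
  (forall eps, eps > 0 -> exists K, forall n k, (K <= k <= n)%nat -> Rabs (b n k) <= eps * w n k) ->
  Un_cv (fun n => sm (b n) n) 0.
Proof.
 intros Pw Bw Hb Hk e he. destruct (Hk (e / 4) ltac:(lra)) as [K HK].
 set (f n k := if (k <? K)%nat then Rabs (b n k) else 0).
 assert (Cf : Un_cv (fun n => sm (f n) K) 0).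
 { replace 0 with (sm (fun _ => 0) K) by (clear; induction K; simpl; lra).
   apply Un_cv_sm. intros k hk. unfold f. destruct (k <? K)%nat.
   - intros e' he'. destruct (Hb k ltac:(lia) e' he') as [N HN]. exists N. intros n hn. specialize (HN n hn).
     unfold Rdist in *. rewrite Rminus_0_r in *. rewrite Rabs_Rabsolu. auto.
   - apply Un_cv_const. }
 destruct (Cf (e / 2) ltac:(lra)) as [N HN]. exists N. intros n hn. specialize (HN n hn).
 unfold Rdist in *. rewrite Rminus_0_r in *.
 assert (Pf : forall k, 0 <= f n k). { intro k. unfold f. destruct (k <? K)%nat. apply Rabs_pos. lra. }
 assert (A1 : sm (f n) n <= sm (f n) K).
 { apply sm_trunc; auto. intros k hk. unfold f. replace (k <? K)%nat with false; auto. symmetry. apply Nat.ltb_ge. lia. }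
 assert (A2 : Rabs (sm (b n) n) <= sm (f n) n + e / 4 * sm (w n) n).
 { rewrite <- sm_scal, <- sm_plus. eapply Rle_trans. apply sm_abs. apply sm_le_in. intros k hk.
   unfold f. destruct (k <? K)%nat eqn:E. pose proof (Pw n k hk). nra.
   apply Nat.ltb_ge in E. pose proof (HK n k ltac:(lia)). lra. }
 assert (0 <= sm (w n) n) by (apply sm_nonneg_in; intros; apply Pw; auto).
 specialize (Bw n). rewrite Rabs_pos_eq in HN by (apply sm_nonneg_in; intros; apply Pf). nra.
Qed.

Lemma M1 j : Un_cv (fun n => sm (fun k => (1 - rho k) * u n k ^ S j) n) (r ^ S j / INR (S j)).
Proof.
 set (J := INR (S j)). assert (HJ : 0 < J) by (apply lt_0_INR; lia).
 set (b n k := J * (1 - rho k) * u n k ^ S j - (u n k ^ S j - u n (k - 1)%nat ^ S j)).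
 assert (Hb : Un_cv (fun n => sm (b n) n) 0).
 { apply (vanish b (fun n k => (1 - rho k) * u n k ^ S j)).
   - intros n k hk. destruct (Hrho k); try lia. apply Rmult_le_pos. lra. apply pow_le. apply Hpos; lia.
   - intro n. apply W_bound. lia.
   - intros k _. unfold b. replace 0 with (J * (1 - rho k) * 0 ^ S j - (0 ^ S j - 0 ^ S j)) by (simpl; ring).
     apply CV_minus. apply (CV_mult (fun _ => J * (1 - rho k))). apply Un_cv_const. apply Un_cv_pow, u_to_0.
     apply CV_minus; apply Un_cv_pow, u_to_0.
   - intros e he.
     destruct (Hrho1 (e / J ^ 2) ltac:(apply Rdiv_lt_0_compat; nra)) as [K1 HK1].
     destruct (Hdelta (e / J) ltac:(apply Rdiv_lt_0_compat; lra)) as [K2 HK2].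
     exists (max 1 (max K1 K2)). intros n k hk.
     specialize (HK1 k ltac:(lia)). specialize (HK2 k ltac:(lia)). unfold Rdist in *.
     destruct (Hrho k); try lia. rewrite Rminus_0_r in HK2.
     apply Rabs_def2 in HK1. apply Rabs_def2 in HK2.
     unfold b. apply (key_ineq j (rho k) (G2 k)).
     + lra.
     + apply HG2; lia.
     + split. apply Hpos; lia. pose proof (u_le_r n k ltac:(lia)). lra.
     + apply Hpos; lia.
     + replace (u n k ^ 2) with (u n k ^ 2) by reflexivity. apply Hrec; lia.
     + fold J. assert (J ^ 2 * (1 - rho k) < J ^ 2 * (e / J ^ 2)). apply Rmult_lt_compat_l; nra.
       replace (J ^ 2 * (e / J ^ 2)) with e in H1 by (field; lra). lra.
     + fold J. assert (G2 k / (1 - rho k) < e / J) by lra.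
       apply (Rmult_lt_compat_l J) in H1; auto.
       replace (J * (e / J)) with e in H1 by (field; lra).
       apply (Rmult_le_reg_r (/ (1 - rho k))). apply Rinv_0_lt_compat; lra.
       replace (J * G2 k * / (1 - rho k)) with (J * (G2 k / (1 - rho k))) by (unfold Rdiv; ring).
       replace (e * (1 - rho k) * / (1 - rho k)) with e by (field; lra). lra. }
 assert (E : forall n, sm (fun k => (1 - rho k) * u n k ^ S j) n = (r ^ S j - u n 0%nat ^ S j + sm (b n) n) / J).
 { intro n. unfold b. rewrite sm_minus, (sm_tele (fun k => u n k ^ S j)), Hun.
   replace (sm (fun k => J * (1 - rho k) * u n k ^ S j) n) with (J * sm (fun k => (1 - rho k) * u n k ^ S j) n).
   field. lra. rewrite <- sm_scal. apply sm_ext_in. intros; ring. }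
 apply (Un_cv_ext (fun n => (r ^ S j - u n 0%nat ^ S j + sm (b n) n) / J)). intro n. symmetry. apply E.
 replace (r ^ S j / J) with ((r ^ S j - 0 ^ S j + 0) / J) by (simpl; field; lra).
 unfold Rdiv. apply (CV_mult _ (fun _ => / J)). 2: apply Un_cv_const.
 apply CV_plus; auto. apply CV_minus. apply Un_cv_const. apply Un_cv_pow, u_to_0.
Qed.

Lemma M2 j (a : nat -> R) al : Un_cv a al ->
  Un_cv (fun n => sm (fun k => (1 - rho k) * a k * u n k ^ S j) n) (al * r ^ S j / INR (S j)).
Proof.
 intro Ha.
 assert (Hb : Un_cv (fun n => sm (fun k => (1 - rho k) * (a k - al) * u n k ^ S j) n) 0).
 { apply (vanish (fun n k => (1 - rho k) * (a k - al) * u n k ^ S j) (fun n k => (1 - rho k) * u n k ^ S j)).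
   - intros n k hk. destruct (Hrho k); try lia. apply Rmult_le_pos. lra. apply pow_le. apply Hpos; lia.
   - intro n. apply W_bound. lia.
   - intros k _. replace 0 with ((1 - rho k) * (a k - al) * 0 ^ S j) by (simpl; ring).
     apply (CV_mult (fun _ => (1 - rho k) * (a k - al))). apply Un_cv_const. apply Un_cv_pow, u_to_0.
   - intros e he. destruct (Ha e he) as [K HK]. exists (max 1 K). intros n k hk.
     specialize (HK k ltac:(lia)). unfold Rdist in HK. destruct (Hrho k); try lia.
     assert (0 <= u n k ^ S j) by (apply pow_le; apply Hpos; lia).
     rewrite !Rabs_mult, (Rabs_pos_eq (1 - rho k)) by lra. rewrite (Rabs_pos_eq (u n k ^ S j)) by lra.
     assert (0 <= (1 - rho k) * u n k ^ S j) by (apply Rmult_le_pos; lra). nra. }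
 apply (Un_cv_ext (fun n => al * sm (fun k => (1 - rho k) * u n k ^ S j) n + sm (fun k => (1 - rho k) * (a k - al) * u n k ^ S j) n)).
 intro n. rewrite <- sm_scal, <- sm_plus. apply sm_ext_in. intros; ring.
 replace (al * r ^ S j / INR (S j)) with (al * (r ^ S j / INR (S j)) + 0) by (unfold Rdiv; ring).
 apply CV_plus; auto. apply Un_cv_scal, M1.
Qed.
End U.

Lemma ff_S_S i k : fallfact (S i) (S k) = (S i * fallfact i k)%nat.
Proof. induction k. simpl. lia. change (fallfact (S i) (S (S k))) with ((S i - S k) * fallfact (S i) (S k))%nat.
 rewrite IHk. simpl fallfact. replace (S i - S k)%nat with (i - k)%nat by lia. lia. Qed.

Lemma ff_zero i k : (i < k)%nat -> fallfact i k = 0%nat.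
Proof. intro H. induction H. simpl. rewrite Nat.sub_diag. lia. simpl. rewrite IHle. lia. Qed.

Lemma ff_pascal i j : fallfact (S i) (S j) = (fallfact i (S j) + S j * fallfact i j)%nat.
Proof. rewrite ff_S_S. change (fallfact i (S j)) with ((i - j) * fallfact i j)%nat.
 destruct (le_lt_dec j i). nia. rewrite (ff_zero i j); lia. Qed.

Definition bin i j := INR (fallfact i j) / INR (fact j).

Lemma bin_pascal i j : bin (S i) (S j) = bin i (S j) + bin i j.
Proof. unfold bin. assert (E : INR (fact (S j)) = INR (S j) * INR (fact j)) by (rewrite fact_simpl, mult_INR; reflexivity).
 rewrite E, ff_pascal, plus_INR, mult_INR.
 assert (INR (fact j) <> 0) by apply INR_fact_neq_0. assert (INR (S j) <> 0) by (apply not_0_INR; lia).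
 field. auto. Qed.

Lemma bin_i0 i : bin i 0 = 1.
Proof. unfold bin. simpl. field. Qed.
Lemma bin_0S j : bin 0 (S j) = 0.
Proof. unfold bin. rewrite ff_zero by lia. unfold Rdiv. rewrite Rmult_0_l. reflexivity. Qed.
Lemma bin_nonneg i j : 0 <= bin i j.
Proof. unfold bin. apply Rdiv_le_0_compat. apply pos_INR. apply INR_fact_lt_0. Qed.
Lemma bin_1 i : bin i 1 = INR i.
Proof. unfold bin. simpl. rewrite Nat.sub_0_r. rewrite Nat.mul_1_r. field. Qed.

Definition Dr u i J := (1 - u) ^ i - sum_f_R0 (fun j => bin i j * (- u) ^ j) J.

Lemma Dr_rec u i J : Dr u (S i) (S J) = Dr u i (S J) - u * Dr u i J.
Proof.
 unfold Dr. rewrite decomp_sum by lia. rewrite (decomp_sum (fun j => bin i j * (- u) ^ j)) by lia. simpl pred.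
 rewrite bin_i0, bin_i0.
 assert (E : sum_f_R0 (fun k => bin (S i) (S k) * (- u) ^ S k) J =
   sum_f_R0 (fun k => bin i (S k) * (- u) ^ S k) J + (- u) * sum_f_R0 (fun j => bin i j * (- u) ^ j) J).
 { rewrite scal_sum. rewrite <- sum_plus. apply sum_eq. intros. rewrite bin_pascal. simpl. ring. }
 rewrite E. simpl. ring. Qed.

Lemma Dr_bounds u i J : 0 <= u <= 1 ->
  0 <= (-1) ^ S J * Dr u i J <= bin i (S J) * u ^ S J.
Proof.
 intro Hu. revert J. induction i; intro J.
 - unfold Dr. destruct J. simpl sum_f_R0. rewrite bin_i0. pose proof (bin_nonneg 0 1).
   cbn [pow sum_f_R0]. nra.
   rewrite decomp_sum by lia. simpl pred. rewrite bin_i0.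
   assert (sum_f_R0 (fun k => bin 0 (S k) * (- u) ^ S k) J = 0).
   { transitivity (sum_f_R0 (fun _ => 0) J). apply sum_eq. intros; rewrite bin_0S; ring.
     clear; induction J; simpl; lra. }
   rewrite H, bin_0S. cbn [pow]. lra.
 - destruct J.
   + unfold Dr. simpl sum_f_R0. rewrite bin_i0, bin_1.
     destruct (bern_bounds u (S i) Hu) as [B1 _]. assert ((1 - u) ^ S i <= 1) by (apply pow_le1; lra).
     cbn [pow] in *. lra.
   + rewrite Dr_rec. destruct (IHi J) as [L1 U1]. destruct (IHi (S J)) as [L2 U2].
     replace ((-1) ^ S (S J) * (Dr u i (S J) - u * Dr u i J)) with
       ((-1) ^ S (S J) * Dr u i (S J) + u * ((-1) ^ S J * Dr u i J)) by (simpl; ring).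
     rewrite bin_pascal.
     assert (0 <= u * ((-1) ^ S J * Dr u i J) <= u * (bin i (S J) * u ^ S J)).
     { split. apply Rmult_le_pos; lra. apply Rmult_le_compat_l; lra. }
     replace ((bin i (S (S J)) + bin i (S J)) * u ^ S (S J)) with
       (bin i (S (S J)) * u ^ S (S J) + u * (bin i (S J) * u ^ S J)) by (simpl; ring).
     lra.
Qed.

Lemma IS_finsum_in (a : nat -> nat -> R) c K :
  (forall k, (k <= K)%nat -> IS (fun m => a m k) (c k)) ->
  IS (fun m => sum_f_R0 (fun k => a m k) K) (sum_f_R0 c K).
Proof. intro H. induction K; simpl. apply H; lia. apply IS_plus. apply IHK; intros; apply H; lia. apply H; lia. Qed.

Lemma pgf_expand a (M : nat -> R) J u : is_pmf a -> 0 <= u <= 1 ->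
  (forall j, (j <= S J)%nat -> IS (fun i => INR (fallfact i j) * a i) (M j)) ->
  0 <= (-1) ^ S J * (pgf a (1 - u) - sum_f_R0 (fun j => M j / INR (fact j) * (- u) ^ j) J)
    <= M (S J) / INR (fact (S J)) * u ^ S J.
Proof.
 intros Pa Hu HM.
 destruct (pgf_IS a (1 - u) Pa ltac:(lra)) as [I1 _].
 assert (I2 : IS (fun i => a i * sum_f_R0 (fun j => bin i j * (- u) ^ j) J)
                 (sum_f_R0 (fun j => M j / INR (fact j) * (- u) ^ j) J)).
 { apply (IS_ext2 _ _ _ _ (IS_finsum_in (fun i j => ((- u) ^ j / INR (fact j)) * (INR (fallfact i j) * a i))
              (fun j => ((- u) ^ j / INR (fact j)) * M j) J (fun j hj => IS_scal _ _ _ (HM j ltac:(lia))))).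
   - intro i. rewrite scal_sum. apply sum_eq. intros. unfold bin. field. apply INR_fact_neq_0.
   - apply sum_eq. intros. field. apply INR_fact_neq_0. }
 assert (I3 : IS (fun i => (-1) ^ S J * (a i * Dr u i J))
    ((-1) ^ S J * (pgf a (1 - u) - sum_f_R0 (fun j => M j / INR (fact j) * (- u) ^ j) J))).
 { apply IS_scal. apply (IS_ext2 _ _ _ _ (IS_plus _ _ _ _ I1 (IS_scal (-1) _ _ I2))).
   intro i. unfold Dr. ring. ring. }
 assert (I4 : IS (fun i => (u ^ S J / INR (fact (S J))) * (INR (fallfact i (S J)) * a i))
                 ((u ^ S J / INR (fact (S J))) * M (S J))).
 { apply IS_scal. apply HM. lia. }
 destruct Pa as [Pa _].
 split.
 - apply (IS_nonneg _ _ I3). intro i. destruct (Dr_bounds u i J Hu).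
   replace ((-1) ^ S J * (a i * Dr u i J)) with (a i * ((-1) ^ S J * Dr u i J)) by ring.
   apply Rmult_le_pos; auto.
 - replace (M (S J) / INR (fact (S J)) * u ^ S J) with ((u ^ S J / INR (fact (S J))) * M (S J))
     by (field; apply INR_fact_neq_0).
   apply (IS_le _ _ _ _ I3 I4). intro i. destruct (Dr_bounds u i J Hu).
   replace ((-1) ^ S J * (a i * Dr u i J)) with (a i * ((-1) ^ S J * Dr u i J)) by ring.
   replace (u ^ S J / INR (fact (S J)) * (INR (fallfact i (S J)) * a i)) with (a i * (bin i (S J) * u ^ S J))
     by (unfold bin; field; apply INR_fact_neq_0).
   apply Rmult_le_compat_l; auto.
Qed.

Fixpoint pm (f : nat -> R) (n : nat) : R := match n with O => 1 | S n' => pm f n' * f n end.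

Lemma pm_ext_in f g n : (forall k, (1 <= k <= n)%nat -> f k = g k) -> pm f n = pm g n.
Proof. induction n; simpl; intros H; auto. rewrite IHn, (H (S n)); auto; try lia; intros; apply H; lia. Qed.
Lemma pm_le f g n : (forall k, (1 <= k <= n)%nat -> 0 <= f k <= g k) -> 0 <= pm f n <= pm g n.
Proof. induction n; simpl; intros H. lra. destruct IHn as [A B]. intros; apply H; lia.
 destruct (H (S n) ltac:(lia)). split. apply Rmult_le_pos; lra. apply Rmult_le_compat; lra. Qed.
Lemma pm_exp f n : pm (fun k => exp (f k)) n = exp (sm f n).
Proof. induction n; simpl. rewrite exp_0; auto. rewrite IHn, exp_plus. auto. Qed.

Lemma pgf_pos a s : is_pmf a -> 0 < s <= 1 -> 0 < pgf a s.
Proof.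
 intros Pa Hs. destruct (pgf_IS a s Pa ltac:(lra)) as [I _].
 destruct (Classical_Prop.classic (exists i, a i > 0)) as [[i Hi]|Hn].
 - apply Rlt_le_trans with (sum_f_R0 (fun j => a j * s ^ j) i).
   + destruct i. simpl. lra. simpl. apply Rplus_le_lt_0_compat. apply cond_pos_sum.
     intro; apply Rmult_le_pos. apply Pa. apply pow_le; lra. apply Rmult_lt_0_compat; auto. apply Rmult_lt_0_compat; [lra|apply pow_lt; lra].
   + apply IS_partial_le; auto. intro; apply Rmult_le_pos. apply Pa. apply pow_le; lra.
 - exfalso. destruct Pa as [P S]. assert (Z : forall i, a i = 0).
   { intro i. destruct (P i); auto. exfalso; apply Hn; exists i; lra. }
   assert (IS a 0). { apply (Un_cv_ext (fun _ => 0)). intro n. induction n; simpl; rewrite Z; lra. apply Un_cv_const. }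
   pose proof (IS_unique _ _ _ S H). lra.
Qed.

Lemma pm1_cases N : (-1) ^ N = 1 \/ (-1) ^ N = -1.
Proof. induction N. left; simpl; auto. simpl. destruct IHN as [e|e]; rewrite e; [right|left]; ring. Qed.

Lemma abs_le_elim x c : Rabs x <= c -> - c <= x <= c.
Proof. intro H. unfold Rabs in H. destruct (Rcase_abs x); lra. Qed.

Lemma decomp_sum' f N : sum_f_R0 f (S N) = f 0%nat + sum_f_R0 (fun i => f (S i)) N.
Proof. rewrite decomp_sum by lia. reflexivity. Qed.

Section H.
Variables (rho G2 : nat -> R) (r : R) (u : nat -> nat -> R).
Hypothesis Hr : 0 < r < 1.
Hypothesis Hrho : forall k, (1 <= k)%nat -> 0 <= rho k < 1.
Hypothesis HG2 : forall k, (1 <= k)%nat -> 0 <= G2 k.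
Hypothesis Hrho1 : Un_cv rho 1.
Hypothesis Hdelta : Un_cv (fun n => G2 n / (1 - rho n)) 0.
Hypothesis Hinf : cv_infty (fun N => sum_f_R0 (fun n => 1 - rho (S n)) N).
Hypothesis Hun : forall n, u n n = r.
Hypothesis Hrec : forall n k, (1 <= k <= n)%nat ->
  rho k * u n k - G2 k * u n k ^ 2 / 2 <= u n (k - 1)%nat <= rho k * u n k.
Hypothesis Hpos : forall n k, (k <= n)%nat -> 0 <= u n k.
Hypothesis Hur : forall n k, 0 <= u n k <= r.

Variables (h m : nat -> nat -> R) (lam : nat -> R) (Sl : R).
Hypothesis Hh : forall k, (1 <= k)%nat -> is_pmf (h k).
Hypothesis Hm : forall k j, (1 <= k)%nat -> (1 <= j)%nat -> fmoment (h k) j (m k j).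
Hypothesis Hlam : forall j, (1 <= j)%nat -> Un_cv (fun k => m k j / (INR j * (1 - rho k))) (lam j).
Hypothesis Hser : IS (fun i => (-1) ^ i * (lam (S i) * r ^ S i / INR (fact (S i)))) Sl.
Hypothesis Htail : Un_cv (fun N => lam (S N) * r ^ S N / INR (fact (S N))) 0.

Let M2' := M2 rho G2 r u Hr Hrho HG2 Hrho1 Hdelta Hinf Hun Hrec Hpos.
Let W' := W_bound rho G2 r u Hr Hrho Hun Hrec Hpos.
Let u0' := u_to_0 rho G2 r u Hrho Hinf Hun Hrec Hpos.

Definition mm k j := if (j =? 0)%nat then 1 else m k j.

Lemma mm_IS k j : (1 <= k)%nat -> IS (fun i => INR (fallfact i j) * h k i) (mm k j).
Proof. intro hk. unfold mm. destruct j. simpl. destruct (Hh k hk) as [_ S].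
 apply (IS_ext2 _ _ _ _ S). intro; simpl; ring. auto. apply Hm; lia. Qed.

Lemma m_nonneg k j : (1 <= k)%nat -> (1 <= j)%nat -> 0 <= m k j.
Proof. intros hk hj. apply (IS_nonneg _ _ (Hm k j hk hj)). intro i. apply Rmult_le_pos. apply pos_INR. apply (Hh k hk). Qed.

Definition alpha k i := m k (S i) / (INR (fact (S i)) * (1 - rho k)).

Lemma alpha_cv i : Un_cv (fun k => alpha k i) (lam (S i) * INR (S i) / INR (fact (S i))).
Proof.
 apply (Un_cv_ext_ev (fun k => (m k (S i) / (INR (S i) * (1 - rho k))) * (INR (S i) / INR (fact (S i))))).
 exists 1%nat. intros k hk. unfold alpha. destruct (Hrho k); try lia.
 assert (INR (S i) <> 0) by (apply not_0_INR; lia). assert (INR (fact (S i)) <> 0) by apply INR_fact_neq_0.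
 field. repeat split; auto; lra.
 replace (lam (S i) * INR (S i) / INR (fact (S i))) with (lam (S i) * (INR (S i) / INR (fact (S i)))) by (unfold Rdiv; ring). apply (CV_mult _ (fun _ => INR (S i) / INR (fact (S i)))).
 apply Hlam; lia. apply Un_cv_const.
Qed.

Definition y n k := 1 - pgf (h k) (1 - u n k).

Lemma y_bounds n k : (1 <= k)%nat -> 0 <= y n k <= m k 1%nat * u n k.
Proof. intro hk. pose proof (Hur n k).
 pose proof (pgf_expand (h k) (mm k) 0 (u n k) (Hh k hk) ltac:(lra) (fun j _ => mm_IS k j hk)) as [A B].
 unfold y. simpl sum_f_R0 in *. unfold mm in *. simpl in A, B. lra. Qed.

Lemma y_lt1 n k : (1 <= k)%nat -> y n k < 1.
Proof. intro hk. unfold y. pose proof (Hur n k). pose proof (pgf_pos (h k) (1 - u n k) (Hh k hk) ltac:(lra)). lra. Qed.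

Lemma y_expand n k N : (1 <= k)%nat ->
  Rabs (y n k - sum_f_R0 (fun i => (-1) ^ i * (m k (S i) / INR (fact (S i)) * u n k ^ S i)) N)
   <= m k (S (S N)) / INR (fact (S (S N))) * u n k ^ S (S N).
Proof. intro hk. pose proof (Hur n k).
 pose proof (pgf_expand (h k) (mm k) (S N) (u n k) (Hh k hk) ltac:(lra) (fun j _ => mm_IS k j hk)) as [A B].
 rewrite decomp_sum' in A, B.
 assert (E : sum_f_R0 (fun i => mm k (S i) / INR (fact (S i)) * (- u n k) ^ S i) N =
             - sum_f_R0 (fun i => (-1) ^ i * (m k (S i) / INR (fact (S i)) * u n k ^ S i)) N).
 { match goal with |- _ = - ?S => replace (- S) with (-1 * S) by ring end.
   rewrite scal_sum. apply sum_eq. intros i _. unfold mm. simpl Nat.eqb.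
   cbv iota. replace (- u n k) with ((-1) * u n k) by ring. rewrite Rpow_mult_distr. simpl pow. ring. }
 rewrite E in A, B. unfold mm in A, B. simpl Nat.eqb in A, B. cbv iota in A, B.
 replace (1 / INR (fact 0) * (- u n k) ^ 0) with 1 in A, B by (simpl; field).
 replace ((-1) ^ S (S N)) with ((-1) ^ N) in A, B by (simpl; ring).
 unfold y. set (T := sum_f_R0 _ N) in *.
 replace (1 - pgf (h k) (1 - u n k) - T) with (- (pgf (h k) (1 - u n k) - (1 + - T))) by ring.
 rewrite Rabs_Ropp. destruct (pm1_cases N) as [e|e]; rewrite e in A, B.
 - rewrite Rabs_pos_eq; lra.
 - rewrite Rabs_left1; lra.
Qed.

Lemma Ci i : Un_cv (fun n => sm (fun k => m k (S i) / INR (fact (S i)) * u n k ^ S i) n)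
                   (lam (S i) * r ^ S i / INR (fact (S i))).
Proof.
 pose proof (M2' i _ _ (alpha_cv i)) as H.
 apply (Un_cv_ext (fun n => sm (fun k => (1 - rho k) * alpha k i * u n k ^ S i) n)).
 - intro n. apply sm_ext_in. intros k hk. unfold alpha. destruct (Hrho k); try lia.
   assert (INR (fact (S i)) <> 0) by apply INR_fact_neq_0. field. split; auto; lra.
 - replace (lam (S i) * r ^ S i / INR (fact (S i))) with
     (lam (S i) * INR (S i) / INR (fact (S i)) * r ^ S i / INR (S i)). auto.
   assert (INR (fact (S i)) <> 0) by apply INR_fact_neq_0. assert (INR (S i) <> 0) by (apply not_0_INR; lia).
   field. auto.
Qed.

Lemma Y_cv : Un_cv (fun n => sm (y n) n) Sl.
Proof.
 set (A n N := sm (fun k => sum_f_R0 (fun i => (-1) ^ i * (m k (S i) / INR (fact (S i)) * u n k ^ S i)) N) n).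
 set (T N := sum_f_R0 (fun i => (-1) ^ i * (lam (S i) * r ^ S i / INR (fact (S i)))) N).
 assert (HA : forall N, Un_cv (fun n => A n N) (T N)).
 { intro N. unfold A, T. apply (Un_cv_ext (fun n => sum_f_R0 (fun i => (-1) ^ i * sm (fun k => m k (S i) / INR (fact (S i)) * u n k ^ S i) n) N)).
   - intro n. rewrite sm_swap. apply sum_eq. intros i _. rewrite <- sm_scal. reflexivity.
   - apply (Un_cv_sum (fun n i => (-1) ^ i * sm (fun k => m k (S i) / INR (fact (S i)) * u n k ^ S i) n)).
     intros i _. apply Un_cv_scal. apply Ci. }
 assert (HB : forall n N, Rabs (sm (y n) n - A n N) <=
     sm (fun k => m k (S (S N)) / INR (fact (S (S N))) * u n k ^ S (S N)) n).
 { intros n N. unfold A. rewrite <- sm_minus. eapply Rle_trans. apply sm_abs. apply sm_le_in. intros k hk.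
   apply y_expand. lia. }
 intros e he.
 destruct (Hser (e / 4) ltac:(lra)) as [N1 HN1].
 destruct (Htail (e / 4) ltac:(lra)) as [N2 HN2].
 set (N := max N1 N2).
 specialize (HN1 N ltac:(unfold N; lia)). specialize (HN2 (S N) ltac:(unfold N; lia)).
 destruct (HA N (e / 4) ltac:(lra)) as [n1 Hn1].
 destruct (Ci (S N) (e / 4) ltac:(lra)) as [n2 Hn2].
 exists (max n1 n2). intros n hn. specialize (Hn1 n ltac:(lia)). specialize (Hn2 n ltac:(lia)).
 specialize (HB n N). fold (T N) in HN1. unfold Rdist in *. rewrite Rminus_0_r in HN2.
 apply Rabs_def2 in Hn1. apply Rabs_def2 in Hn2. apply Rabs_def2 in HN1.
 pose proof (Rle_abs (lam (S (S N)) * r ^ S (S N) / INR (fact (S (S N))))).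
 apply Rabs_def2 in HN2. apply Rabs_def1.
 - apply abs_le_elim in HB. lra.
 - apply abs_le_elim in HB. lra.
Qed.

Lemma y_to_0 k : (1 <= k)%nat -> Un_cv (fun n => y n k) 0.
Proof. intro hk. apply (squeeze (fun _ => 0) _ (fun n => m k 1%nat * u n k)).
 exists 0%nat. intros. apply y_bounds; auto. apply Un_cv_const.
 replace 0 with (m k 1%nat * 0) by ring. apply Un_cv_scal. apply u0'. Qed.

Lemma m1_cv : Un_cv (fun k => m k 1%nat) 0.
Proof. apply (Un_cv_ext_ev (fun k => (1 - rho k) * alpha k 0)).
 exists 1%nat. intros k hk. unfold alpha. destruct (Hrho k); try lia. simpl (fact 1). simpl INR. field. lra.
 replace 0 with ((1 - 1) * (lam 1%nat * INR 1 / INR (fact 1))) by ring.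
 apply CV_mult. apply (CV_minus (fun _ => 1)). apply Un_cv_const. auto. apply alpha_cv. Qed.

Lemma E2_cv : Un_cv (fun n => sm (fun k => y n k ^ 2 / (1 - y n k)) n) 0.
Proof.
 apply (vanish _ (fun n k => (1 - rho k) * u n k ^ 1)).
 - intros n k hk. destruct (Hrho k); try lia. pose proof (Hur n k). rewrite pow_1. nra.
 - intro n. apply W'. lia.
 - intros k hk. apply (squeeze (fun _ => 0) _ (fun n => 2 * y n k ^ 2)).
   + destruct (y_to_0 k hk (1/2) ltac:(lra)) as [N HN]. exists N. intros n hn. specialize (HN n hn).
     unfold Rdist in HN. rewrite Rminus_0_r in HN. apply Rabs_def2 in HN.
     destruct (y_bounds n k hk). split. apply Rdiv_le_0_compat. nra. lra.
     apply (Rmult_le_reg_r (1 - y n k)). lra. unfold Rdiv. rewrite Rmult_assoc, Rinv_l by lra. nra.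
   + apply Un_cv_const.
   + replace 0 with (2 * 0 ^ 2) by ring. apply Un_cv_scal. apply Un_cv_pow. apply y_to_0; auto.
 - intros e he.
   assert (C : Un_cv (fun k => 2 * m k 1%nat * alpha k 0) 0).
   { replace 0 with (2 * 0 * (lam 1%nat * INR 1 / INR (fact 1))) by ring.
     apply CV_mult. apply Un_cv_scal. apply m1_cv. apply alpha_cv. }
   destruct (C e he) as [K1 HK1]. destruct (m1_cv (1/2) ltac:(lra)) as [K2 HK2].
   exists (max 1 (max K1 K2)). intros n k hk.
   specialize (HK1 k ltac:(lia)). specialize (HK2 k ltac:(lia)). unfold Rdist in *. rewrite Rminus_0_r in *.
   apply Rabs_def2 in HK1. apply Rabs_def2 in HK2.
   destruct (y_bounds n k ltac:(lia)) as [Y1 Y2]. pose proof (Hur n k). destruct (Hrho k); try lia.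
   assert (Em : m k 1%nat = (1 - rho k) * alpha k 0). { unfold alpha. simpl (fact 1). simpl INR. field. lra. }
   assert (Hy : y n k <= 1 / 2). { assert (m k 1%nat * u n k <= m k 1%nat). { assert (0 <= m k 1%nat) by (apply m_nonneg; lia). nra. } lra. }
   rewrite pow_1, Rabs_pos_eq by (apply Rdiv_le_0_compat; nra).
   apply Rle_trans with (2 * y n k ^ 2).
   { apply (Rmult_le_reg_r (1 - y n k)). lra. unfold Rdiv. rewrite Rmult_assoc, Rinv_l by lra. nra. }
   assert (Q1 : y n k ^ 2 <= m k 1%nat * (m k 1%nat * u n k)).
   { simpl. rewrite Rmult_1_r. assert (0 <= m k 1%nat) by (apply m_nonneg; lia). apply Rmult_le_compat; nra. }
   assert (Q2 : 2 * (m k 1%nat * (m k 1%nat * u n k)) = (2 * m k 1%nat * alpha k 0) * ((1 - rho k) * u n k)).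
   { rewrite Em at 2. ring. }
   assert (0 <= (1 - rho k) * u n k) by nra.
   assert ((2 * m k 1%nat * alpha k 0) * ((1 - rho k) * u n k) <= e * ((1 - rho k) * u n k)).
   { apply Rmult_le_compat_r; lra. }
   lra.
Qed.

Lemma P_cv : Un_cv (fun n => pm (fun k => 1 - y n k) n) (exp (- Sl)).
Proof.
 assert (Lw : forall n, exp (sm (fun k => - (y n k + y n k ^ 2 / (1 - y n k))) n) <= pm (fun k => 1 - y n k) n).
 { intro n. rewrite <- pm_exp. apply pm_le. intros k hk. destruct (y_bounds n k ltac:(lia)). pose proof (y_lt1 n k ltac:(lia)).
   split. left; apply exp_pos.
   assert (E : y n k + y n k ^ 2 / (1 - y n k) = y n k / (1 - y n k)) by (field; lra).
   rewrite E. pose proof (exp_ineq1_le (y n k / (1 - y n k))).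
   rewrite exp_Ropp. assert (0 < exp (y n k / (1 - y n k))) by apply exp_pos.
   apply (Rmult_le_reg_r (exp (y n k / (1 - y n k)))); auto. rewrite Rinv_l by lra.
   assert (1 + y n k / (1 - y n k) = / (1 - y n k)) by (field; lra).
   assert (1 = (1 - y n k) * / (1 - y n k)) by (field; lra). nra. }
 assert (Up : forall n, pm (fun k => 1 - y n k) n <= exp (sm (fun k => - y n k) n)).
 { intro n. rewrite <- pm_exp. apply pm_le. intros k hk. pose proof (y_lt1 n k ltac:(lia)).
   pose proof (exp_ineq1_le (- y n k)). lra. }
 apply (squeeze (fun n => exp (sm (fun k => - (y n k + y n k ^ 2 / (1 - y n k))) n)) _ (fun n => exp (sm (fun k => - y n k) n))).
 - exists 0%nat. intros n _. split; auto.
 - apply (continuity_seq exp _ (- Sl)). apply derivable_continuous, derivable_exp.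
   apply (Un_cv_ext (fun n => - (sm (y n) n + sm (fun k => y n k ^ 2 / (1 - y n k)) n))).
   intro n. rewrite <- sm_plus. rewrite <- (Rmult_1_l (sm _ n)) at 1. rewrite Ropp_mult_distr_l, <- sm_scal. apply sm_ext_in. intros; ring.
   replace (- Sl) with (-1 * (Sl + 0)) by ring.
   apply (Un_cv_ext (fun n => -1 * (sm (y n) n + sm (fun k => y n k ^ 2 / (1 - y n k)) n))). intro; ring.
   apply Un_cv_scal. apply CV_plus. apply Y_cv. apply E2_cv.
 - apply (continuity_seq exp _ (- Sl)). apply derivable_continuous, derivable_exp.
   apply (Un_cv_ext (fun n => -1 * sm (y n) n)). intro n. rewrite <- sm_scal. apply sm_ext_in. intros; ring.
   replace (- Sl) with (-1 * Sl) by ring. apply Un_cv_scal. apply Y_cv.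
Qed.
End H.

Lemma lim_nonneg_ev u l : (exists N, forall n, (n >= N)%nat -> 0 <= u n) -> Un_cv u l -> 0 <= l.
Proof. intros [N HN] H. destruct (Rle_lt_dec 0 l); auto. destruct (H (- l) ltac:(lra)) as [N1 H1].
 specialize (H1 (max N N1) ltac:(lia)). specialize (HN (max N N1) ltac:(lia)). unfold Rdist in H1.
 apply Rabs_def2 in H1. lra. Qed.

Lemma sumf_trunc f K N : (forall i, (K < i)%nat -> f i = 0) -> (forall i, 0 <= f i) -> sum_f_R0 f N <= sum_f_R0 f K.
Proof. intros Z P. induction N. simpl. apply Rle_trans with (sum_f_R0 f 0). simpl; lra. apply sum_mono; auto; lia.
 destruct (le_lt_dec (S N) K). apply sum_mono; auto. simpl. rewrite (Z (S N)) by lia. lra. Qed.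

Lemma ex_signed (t : nat -> R) (b : nat -> R) lb : (forall i, Rabs (t i) <= b i) -> IS b lb -> exists l, IS t l.
Proof. intros H I. assert (ex_series t).
 { apply (ex_series_le t b). intro n. apply H. exists lb. apply is_series_Reals. auto. }
 destruct H0 as [l Hl]. exists l. apply is_series_Reals. auto. Qed.

Section G.
Variable lam : nat -> R.
Hypothesis Hnn : forall j, (1 <= j)%nat -> 0 <= lam j.
Hypothesis Hii2 : limsup_le_1 (fun n => nroot n (lam n / INR (fact n))).

Lemma lam_geom eta : eta > 0 -> exists N0, forall n, (n >= N0)%nat -> lam n / INR (fact n) <= (1 + eta) ^ n.
Proof.
 intro he. destruct (Hii2 eta he) as [N HN]. exists (max 1 N). intros n hn. specialize (HN n ltac:(lia)).
 assert (0 < (1 + eta) ^ n) by (apply pow_lt; lra).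
 unfold nroot in HN. destruct (Rle_dec (lam n / INR (fact n)) 0). lra.
 set (z := lam n / INR (fact n)) in *. assert (hz : 0 < z) by lra.
 assert (E : z = Rpower (Rpower z (/ INR n)) (INR n)).
 { rewrite Rpower_mult. rewrite Rinv_l. rewrite Rpower_1; auto. apply not_0_INR. lia. }
 rewrite E. rewrite <- Rpower_pow by lra. apply Rle_Rpower_l. apply pos_INR.
 split; auto. unfold Rpower. apply exp_pos.
Qed.

Definition dd i := lam (S i) / INR (fact (S i)).

Lemma dd_nn i : 0 <= dd i.
Proof. unfold dd. apply Rdiv_le_0_compat. apply Hnn; lia. apply INR_fact_lt_0. Qed.

Lemma dd_bound s : 0 <= s < 1 -> exists N0 q, 0 <= q < 1 /\ forall i, (i >= N0)%nat -> dd i * s ^ S i <= q ^ S i.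
Proof.
 intro hs. set (eta := (1 - s) / (1 + s)). assert (eta > 0) by (unfold eta; apply Rdiv_lt_0_compat; lra).
 destruct (lam_geom eta H) as [N0 HN0]. exists N0, ((1 + eta) * s). split.
 - split. apply Rmult_le_pos; lra. unfold eta. apply (Rmult_lt_reg_r (1 + s)). lra.
   replace ((1 + (1 - s) / (1 + s)) * s * (1 + s)) with (2 * s) by (field; lra). lra.
 - intros i hi. rewrite Rpow_mult_distr. apply Rmult_le_compat_r. apply pow_le; lra. apply HN0. lia.
Qed.

Lemma dd_summable s : 0 <= s < 1 -> exists l, IS (fun i => dd i * s ^ S i) l.
Proof.
 intro hs. destruct (dd_bound s hs) as [N0 [q [hq Hb]]].
 assert (P : forall i, 0 <= dd i * s ^ S i) by (intro; apply Rmult_le_pos; [apply dd_nn|apply pow_le; lra]).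
 destruct (IS_bounded _ (sum_f_R0 (fun i => dd i * s ^ S i) N0 + 1 / (1 - q)) P) as [l [Hl _]].
 2: exists l; auto.
 intro N. set (f i := if (i <=? N0)%nat then dd i * s ^ S i else 0).
 apply Rle_trans with (sum_f_R0 f N + sum_f_R0 (fun i => q ^ i) N).
 - rewrite <- sum_plus. apply sum_Rle. intros i _. unfold f. destruct (i <=? N0)%nat eqn:E.
   + assert (0 <= q ^ i) by (apply pow_le; lra). lra.
   + apply Nat.leb_gt in E. eapply Rle_trans. apply Hb. lia. simpl. assert (0 <= q ^ i) by (apply pow_le; lra).
     nra.
 - apply Rplus_le_compat.
   + eapply Rle_trans. apply (sumf_trunc f N0). intros i hi. unfold f. replace (i <=? N0)%nat with false; auto.
     symmetry. apply Nat.leb_gt. lia. intro i; unfold f. destruct (i <=? N0)%nat; auto; lra.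
     right. apply sum_eq. intros i hi. unfold f. replace (i <=? N0)%nat with true; auto. symmetry. apply Nat.leb_le. auto.
   + rewrite tech3 by lra. assert (0 <= q ^ S N) by (apply pow_le; lra). unfold Rdiv.
     apply Rmult_le_compat_r. left; apply Rinv_0_lt_compat; lra. lra.
Qed.

Lemma dd_tail s : 0 <= s < 1 -> Un_cv (fun N => lam (S N) * s ^ S N / INR (fact (S N))) 0.
Proof.
 intro hs. destruct (dd_bound s hs) as [N0 [q [hq Hb]]].
 apply (squeeze (fun _ => 0) _ (fun N => q ^ S N)).
 - exists N0. intros N hN. specialize (Hb N hN). unfold dd in Hb.
   assert (E : lam (S N) * s ^ S N / INR (fact (S N)) = lam (S N) / INR (fact (S N)) * s ^ S N) by (field; apply INR_fact_neq_0).
   rewrite E. split; auto. apply Rmult_le_pos. apply dd_nn. apply pow_le; lra.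
 - apply Un_cv_const.
 - intros e he. destruct (pow_lt_1_zero q ltac:(rewrite Rabs_pos_eq; lra) e he) as [N HN].
   exists N. intros n hn. unfold Rdist. rewrite Rminus_0_r. apply HN. lia.
Qed.

Definition Lx (x : R) := Series (fun i => (x - 1) ^ S i / INR (fact (S i)) * lam (S i)).

Lemma L_IS x : 0 < x <= 1 -> IS (fun i => (x - 1) ^ S i / INR (fact (S i)) * lam (S i)) (Lx x).
Proof.
 intro hx. destruct (dd_summable (1 - x) ltac:(lra)) as [l Hl].
 destruct (ex_signed (fun i => (x - 1) ^ S i / INR (fact (S i)) * lam (S i)) (fun i => dd i * (1 - x) ^ S i) l) as [L HL]; [|exact Hl|].
 intro i. unfold dd.
 replace ((x - 1) ^ S i / INR (fact (S i)) * lam (S i)) with ((-1) ^ S i * (lam (S i) / INR (fact (S i)) * (1 - x) ^ S i))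
   by (rewrite <- (Rmult_comm ((1 - x) ^ S i)), <- Rmult_assoc, <- Rpow_mult_distr;
       replace (-1 * (1 - x)) with (x - 1) by ring; field; apply INR_fact_neq_0).
 rewrite Rabs_mult. assert (0 <= lam (S i) / INR (fact (S i)) * (1 - x) ^ S i).
 { apply Rmult_le_pos. apply Rdiv_le_0_compat. apply Hnn; lia. apply INR_fact_lt_0. apply pow_le; lra. }
 rewrite (Rabs_pos_eq (_ * _)) by auto. destruct (pm1_cases (S i)) as [E|E]; rewrite E.
 rewrite Rabs_R1; lra. replace (Rabs (-1)) with 1 by (rewrite Rabs_left; lra). lra.
 unfold Lx. rewrite (IS_Series _ _ HL). auto.
Qed.

Lemma L_small : forall eps, eps > 0 -> exists x, 0 < x < 1 /\ exp (Lx x) > 1 - eps.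
Proof.
 intros e he. destruct (dd_summable (1/4) ltac:(lra)) as [A HA].
 assert (A0 : 0 <= A). { apply (IS_nonneg _ _ HA). intro; apply Rmult_le_pos. apply dd_nn. apply pow_le; lra. }
 set (r := Rmin (1/4) (e / (8 * A + 8))).
 assert (hr : 0 < r <= 1/4). { unfold r. split. apply Rmin_glb_lt. lra. apply Rdiv_lt_0_compat; lra. apply Rmin_l. }
 assert (hr2 : r * (8 * A + 8) <= e). { assert (r <= e / (8 * A + 8)) by apply Rmin_r.
   apply (Rmult_le_compat_r (8 * A + 8)) in H. 2: lra. replace (e / (8 * A + 8) * (8 * A + 8)) with e in H by (field; lra). lra. }
 exists (1 - r). split. lra.
 destruct (dd_summable r ltac:(lra)) as [B HB].
 assert (L1 : - Lx (1 - r) <= B).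
 { replace (- Lx (1 - r)) with (-1 * Lx (1 - r)) by ring.
   apply (IS_le _ _ _ _ (IS_scal (-1) _ _ (L_IS (1 - r) ltac:(lra))) HB). intro i.
   replace (1 - r - 1) with (- r) by ring. unfold dd.
   assert (0 <= r ^ S i) by (apply pow_le; lra). assert (0 <= lam (S i)) by (apply Hnn; lia).
   pose proof (INR_fact_lt_0 (S i)).
   replace ((- r) ^ S i) with ((-1) ^ S i * r ^ S i) by (rewrite <- Rpow_mult_distr; f_equal; ring).
   assert (0 <= lam (S i) / INR (fact (S i)) * r ^ S i) by (apply Rmult_le_pos; auto; apply Rdiv_le_0_compat; lra).
   destruct (pm1_cases (S i)) as [E|E]; rewrite E.
   - replace (-1 * (1 * r ^ S i / INR (fact (S i)) * lam (S i))) with (- (lam (S i) / INR (fact (S i)) * r ^ S i)) by (field; lra). lra.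
   - right. field. lra. }
 assert (L2 : B <= 4 * r * A).
 { apply (IS_le _ _ _ _ HB (IS_scal (4 * r) _ _ HA)). intro i.
   assert (r ^ S i <= 4 * r * (1/4) ^ S i).
   { simpl. replace (4 * r * (1 / 4 * (1 / 4) ^ i)) with (r * (1/4) ^ i) by field.
     apply Rmult_le_compat_l. lra. apply pow_incr. lra. }
   pose proof (dd_nn i). nra. }
 pose proof (exp_ineq1_le (Lx (1 - r))). nra.
Qed.
End G.

Fixpoint sq (g : nat -> nat -> R) (n k : nat) (x : R) : R :=
  match n with
  | O => x
  | S n' => if (S n' <=? k)%nat then x else sq g n' k (pgf (g (S n')) x)
  end.

Lemma sq_id g n k x : (n <= k)%nat -> sq g n k x = x.
Proof. destruct n; auto. intro H.
 change (sq g (S n) k x) with (if (S n <=? k)%nat then x else sq g n k (pgf (g (S n)) x)).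
 replace (S n <=? k)%nat with true; auto. symmetry; apply Nat.leb_le; auto. Qed.

Lemma sq_S g n k x : (k <= n)%nat -> sq g (S n) k x = sq g n k (pgf (g (S n)) x).
Proof. intro H.
 change (sq g (S n) k x) with (if (S n <=? k)%nat then x else sq g n k (pgf (g (S n)) x)).
 replace (S n <=? k)%nat with false; auto. symmetry; apply Nat.leb_gt; lia. Qed.

Lemma sq_rec g n k x : (1 <= k <= n)%nat -> sq g n (k - 1) x = pgf (g k) (sq g n k x).
Proof.
 revert x. induction n; intros x H. lia.
 destruct (Nat.eq_dec k (S n)).
 - subst k. rewrite (sq_id g (S n) (S n)) by lia. replace (S n - 1)%nat with n by lia.
   rewrite sq_S by lia. rewrite sq_id by lia. auto.
 - rewrite sq_S by lia. rewrite sq_S by lia. apply IHn. lia.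
Qed.

Section Main.
Variables (g h : nat -> nat -> R) (p : nat -> nat -> R)
  (rho G2 : nat -> R) (m : nat -> nat -> R) (lam : nat -> R).
Hypothesis Hg : forall n, (1 <= n)%nat -> is_pmf (g n).
Hypothesis Hh : forall n, (1 <= n)%nat -> is_pmf (h n).
Hypothesis Hp : bpi_law g h p.
Hypothesis Hrho : forall n, (1 <= n)%nat -> fmoment (g n) 1 (rho n).
Hypothesis HG2 : forall n, (1 <= n)%nat -> fmoment (g n) 2 (G2 n).
Hypothesis Hm : forall n k, (1 <= n)%nat -> (1 <= k)%nat -> fmoment (h n) k (m n k).
Hypothesis Hi1 : forall n, (1 <= n)%nat -> rho n < 1.
Hypothesis Hi2 : Un_cv rho 1.
Hypothesis Hi3 : cv_infty (fun N => sum_f_R0 (fun n => 1 - rho (S n)) N).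
Hypothesis Hi4 : Un_cv (fun n => G2 n / (1 - rho n)) 0.
Hypothesis Hii1 : forall j, (1 <= j)%nat ->
            Un_cv (fun n => m n j / (INR j * (1 - rho n))) (lam j).
Hypothesis Hii2 : limsup_le_1 (fun n => nroot n (lam n / INR (fact n))).

Definition Mg k j := match j with O => 1 | 1%nat => rho k | _ => G2 k end.

Lemma Mg_IS k j : (1 <= k)%nat -> (j <= 2)%nat -> IS (fun i => INR (fallfact i j) * g k i) (Mg k j).
Proof. intros hk hj. destruct j as [|[|[|j]]]; simpl Mg; try lia.
 - destruct (Hg k hk) as [_ S]. apply (IS_ext2 _ _ _ _ S). intro; simpl; ring. auto.
 - apply Hrho; auto.
 - apply HG2; auto. Qed.

Lemma rho_nn k : (1 <= k)%nat -> 0 <= rho k.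
Proof. intro hk. apply (IS_nonneg _ _ (Hrho k hk)). intro i. apply Rmult_le_pos. apply pos_INR. apply (Hg k hk). Qed.
Lemma G2_nn k : (1 <= k)%nat -> 0 <= G2 k.
Proof. intro hk. apply (IS_nonneg _ _ (HG2 k hk)). intro i. apply Rmult_le_pos. apply pos_INR. apply (Hg k hk). Qed.

Lemma G_bounds k u : (1 <= k)%nat -> 0 <= u <= 1 ->
  rho k * u - G2 k * u ^ 2 / 2 <= 1 - pgf (g k) (1 - u) <= rho k * u.
Proof. intros hk hu.
 pose proof (pgf_expand (g k) (Mg k) 1 u (Hg k hk) hu (fun j hj => Mg_IS k j hk hj)) as [A B].
 simpl Mg in A, B. simpl sum_f_R0 in A, B. simpl fact in A, B. simpl INR in A, B.
 replace (2 * 1) with 2 in B by ring. cbn [pow] in A, B. lra. Qed.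

Lemma sq_range n k s : 0 <= s <= 1 -> s <= sq g n k s <= 1.
Proof.
 revert s. induction n; intros s hs. simpl. lra.
 destruct (le_lt_dec (S n) k). rewrite sq_id; auto. lra.
 rewrite sq_S by lia. destruct (G_bounds (S n) (1 - s) ltac:(lia) ltac:(lra)) as [_ B].
 replace (1 - (1 - s)) with s in B by ring.
 pose proof (Hi1 (S n) ltac:(lia)). pose proof (rho_nn (S n) ltac:(lia)).
 destruct (pgf_IS (g (S n)) s (Hg (S n) ltac:(lia)) hs) as [_ [C1 C2]].
 assert (s <= pgf (g (S n)) s) by nra.
 destruct (IHn (pgf (g (S n)) s) ltac:(lra)). lra.
Qed.

Lemma P_prod n x : 0 <= x <= 1 -> pgf (p n) x = pm (fun k => pgf (h k) (sq g n k x)) n.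
Proof.
 revert x. induction n; intros x hx.
 - simpl. destruct Hp as [-> _]. apply delta0_pmf.
 - rewrite (pgf_rec g h p Hg Hh Hp n x hx). cbn [pm].
   destruct (pgf_IS (g (S n)) x (Hg (S n) ltac:(lia)) hx) as [_ C].
   rewrite (IHn _ C). rewrite sq_id by lia. f_equal. apply pm_ext_in. intros k hk. rewrite sq_S by lia. auto.
Qed.

Lemma lam_nn j : (1 <= j)%nat -> 0 <= lam j.
Proof. intro hj. apply (lim_nonneg_ev (fun n => m n j / (INR j * (1 - rho n)))); [|exact (Hii1 j hj)]. exists 1%nat. intros n hn.
 apply Rdiv_le_0_compat. apply (IS_nonneg _ _ (Hm n j ltac:(lia) hj)). intro i. apply Rmult_le_pos. apply pos_INR. apply (Hh n ltac:(lia)).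
 apply Rmult_lt_0_compat. apply lt_0_INR; lia. pose proof (Hi1 n ltac:(lia)). lra. Qed.

Lemma pgf_conv x : 0 < x < 1 -> Un_cv (fun n => pgf (p n) x) (exp (Lx lam x)).
Proof.
 intro hx. set (r := 1 - x). set (u n k := 1 - sq g n k x).
 assert (Hr : 0 < r < 1) by (unfold r; lra).
 assert (Hrh : forall k, (1 <= k)%nat -> 0 <= rho k < 1) by (intros; split; [apply rho_nn|apply Hi1]; auto).
 assert (Hun : forall n, u n n = r) by (intro n; unfold u, r; rewrite sq_id; auto).
 assert (Hur : forall n k, 0 <= u n k <= r) by (intros n k; unfold u, r; pose proof (sq_range n k x ltac:(lra)); lra).
 assert (Hpos : forall n k, (k <= n)%nat -> 0 <= u n k) by (intros; apply Hur).
 assert (Hrec : forall n k, (1 <= k <= n)%nat ->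
   rho k * u n k - G2 k * u n k ^ 2 / 2 <= u n (k - 1)%nat <= rho k * u n k).
 { intros n k hk. assert (E : u n (k - 1)%nat = 1 - pgf (g k) (1 - u n k)).
   { unfold u. rewrite sq_rec by auto. f_equal. f_equal. ring. }
   rewrite E. apply G_bounds. lia. pose proof (Hur n k). lra. }
 assert (Hser : IS (fun i => (-1) ^ i * (lam (S i) * r ^ S i / INR (fact (S i)))) (- Lx lam x)).
 { replace (- Lx lam x) with (-1 * Lx lam x) by ring.
   apply (IS_ext2 _ _ _ _ (IS_scal (-1) _ _ (L_IS lam lam_nn Hii2 x ltac:(lra)))).
   - intro i. unfold r. replace (x - 1) with (-1 * (1 - x)) by ring. rewrite Rpow_mult_distr.
     simpl pow at 1. field. apply INR_fact_neq_0.
   - auto. }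
 pose proof (P_cv rho G2 r u Hr Hrh G2_nn Hi2 Hi4 Hi3 Hun Hrec Hpos Hur h m lam (- Lx lam x)
             Hh Hm Hii1 Hser (dd_tail lam lam_nn Hii2 r ltac:(lra))) as H.
 rewrite Ropp_involutive in H.
 revert H. apply Un_cv_ext. intro n. rewrite P_prod by lra. apply pm_ext_in. intros k hk.
 unfold y, u. replace (1 - (1 - sq g n k x)) with (sq g n k x) by ring. ring.
Qed.


Lemma final : exists q : nat -> R,
    is_pmf q /\
    (forall k, Un_cv (fun n => p n k) (q k)) /\
    (forall x, 0 < x < 1 ->
       exists L,
         infinite_sum (fun i => (x - 1) ^ (S i) / INR (fact (S i)) * lam (S i)) L /\
         infinite_sum (fun k => q k * x ^ k) (exp L)).
Proof.
 destruct (cont_thm p (fun x => exp (Lx lam x)) (p_pmf g h p Hg Hh Hp) pgf_conv (L_small lam lam_nn Hii2))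
   as [q [Pq [Cq Iq]]].
 exists q. split; auto. split; auto. intros x hx. exists (Lx lam x). split.
 apply L_IS; auto. apply lam_nn. lra. apply Iq; auto.
Qed.
End Main.

Theorem theorem4
  (g h : nat -> nat -> R) (p : nat -> nat -> R)
  (rho G2 : nat -> R) (m : nat -> nat -> R) (lam : nat -> R)
  (Hg : forall n, (1 <= n)%nat -> is_pmf (g n))
  (Hh : forall n, (1 <= n)%nat -> is_pmf (h n))
  (Hp : bpi_law g h p)
  (Hrho : forall n, (1 <= n)%nat -> fmoment (g n) 1 (rho n))
  (HG2 : forall n, (1 <= n)%nat -> fmoment (g n) 2 (G2 n))
  (Hm : forall n k, (1 <= n)%nat -> (1 <= k)%nat -> fmoment (h n) k (m n k))
  (Hi1 : forall n, (1 <= n)%nat -> rho n < 1)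
  (Hi2 : Un_cv rho 1)
  (Hi3 : cv_infty (fun N => sum_f_R0 (fun n => 1 - rho (S n)) N))
  (Hi4 : Un_cv (fun n => G2 n / (1 - rho n)) 0)
  (Hii1 : forall j, (1 <= j)%nat ->
            Un_cv (fun n => m n j / (INR j * (1 - rho n))) (lam j))
  (Hii2 : limsup_le_1 (fun n => nroot n (lam n / INR (fact n)))) :
  exists q : nat -> R,
    is_pmf q /\
    (forall k, Un_cv (fun n => p n k) (q k)) /\
    (forall x, 0 < x < 1 ->
       exists L,
         infinite_sum (fun i => (x - 1) ^ (S i) / INR (fact (S i)) * lam (S i)) L /\
         infinite_sum (fun k => q k * x ^ k) (exp L)).
Proof. exact (final g h p rho G2 m lam Hg Hh Hp Hrho HG2 Hm Hi1 Hi2 Hi3 Hi4 Hii1 Hii2). Qed.
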